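(* There is a constant $C$, independent of $x,y,\xi$, such that for real $\xi\notin\{\pm k_1,\pm k_2,\pm\xi_1,\dots,\pm\xi_N\}$ and $y<x$ the following hold. (a) If $|\xi|>k_2$: $|R_{\xi,0^+}(x,y)|\le C(1+|\xi|)^{-1}e^{-\tilde B|x-y|}$ when $y<x<-d$, or $d<y<x$, or $y<-d<d<x$; and $|R_{\xi,0^+}(x,y)|\le C(1+|\xi|)^{-1}e^{-\tilde A|x-y|}$ in all other cases with $y<x$. (b) If $k_1<|\xi|<k_2$: $|R_{\xi,0^+}(x,y)|\le C\dfrac{e^{-\tilde B|x-y|}}{\sqrt{|\xi^2-k_1^2|}\prod_{n=1}^N|\xi^2-\xi_n^2|}$. (c) If $|\xi|<k_1$: $|R_{\xi,0^+}(x,y)|\le \dfrac{C}{\sqrt{|\xi^2-k_1^2|}}$. The analogous estimates hold for $x<y$ (with the roles of $x$ and $y$ interchanged).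
   Context: Let $0<k_1<k_2$, $d>0$, $q(x)=(k_2^2-k_1^2)\chi_{[-d,d]}(x)$, and $\tilde A=\sqrt{\xi^2-k_2^2}$, $\tilde B=\sqrt{\xi^2-k_1^2}$. Principal square root on $\mathbb{C}\setminus(-\infty,0]$. For $\xi\in\mathbb{R}$, $u_\pm(\xi,0^+;\cdot)$ are the solutions of $u''+(k_1^2+q(x)-\xi^2)u=0$ (with $u,u'$ continuous) with $u_\pm(\xi,0^+;x)=e^{\pm ix\sqrt{k_1^2-\xi^2}}$ for $\pm x>d$, where $\sqrt{k_1^2-\xi^2}:=i\sqrt{\xi^2-k_1^2}$ for $|\xi|>k_1$ (the $\delta\to0^+$ limit of $\sqrt{k_1^2-\xi^2+i\delta}$). $W(\xi,0^+)=u_-\partial_xu_+-u_+\partial_xu_-$ is their Wronskian. $\xi_1,\dots,\xi_N$ are the zeros of $W(\cdot,0^+)$ in $(k_1,k_2)$. The outgoing resolvent kernel of $\partial_x^2+k_1^2+q(x)-\xi^2$ is $R_{\xi,0^+}(x,y)=u_+(\xi,0^+;x)u_-(\xi,0^+;y)/W(\xi,0^+)$ for $y<x$ and $R_{\xi,0^+}(x,y)=u_-(\xi,0^+;x)u_+(\xi,0^+;y)/W(\xi,0^+)$ for $x<y$. *)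

(* Defs.v *)
From Stdlib Require Import Reals List.
From Coquelicot Require Import Coquelicot.
Open Scope R_scope.

Definition qpot (k1 k2 d x : R) : R :=
  if Rle_dec (- d) x then (if Rle_dec x d then k2 ^ 2 - k1 ^ 2 else 0) else 0.

(* sqrt(k1^2 - xi^2) with the convention sqrt(k1^2-xi^2) := i sqrt(xi^2-k1^2)
   for |xi| > k1 (limit delta -> 0+ of sqrt(k1^2 - xi^2 + i delta)). *)
Definition kappa (k1 xi : R) : C :=
  if Rlt_dec (Rabs xi) k1 then (sqrt (k1 ^ 2 - xi ^ 2), 0)
  else (0, sqrt (xi ^ 2 - k1 ^ 2)).

Definition expIC (z : C) : C :=
  (exp (- Im z) * cos (Re z), exp (- Im z) * sin (Re z)).

Definition is_sol (k1 k2 d xi : R) (u du : R -> C) : Prop :=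
  (forall x, is_derive u x (du x)) /\
  (forall x, continuous du x) /\
  (forall x, x <> - d -> x <> d ->
     is_derive du x (Cmult (RtoC (- (k1 ^ 2 + qpot k1 k2 d x - xi ^ 2))) (u x))).

(* Wronskian W = u_- u_+' - u_+ u_-' (evaluated at x = 0; it is constant). *)
Definition wronsk (um dum up dup : R -> C) : C :=
  Cminus (Cmult (um 0) (dup 0)) (Cmult (up 0) (dum 0)).

Definition resolvent (um up : R -> C) (W : C) (x y : R) : C :=
  if Rlt_dec y x then Cmult (Cmult (up x) (um y)) (Cinv W)
  else Cmult (Cmult (um x) (up y)) (Cinv W).

Definition outside_region (d lo hi : R) : Prop :=
  hi < - d \/ d < lo \/ (lo < - d /\ d < hi).

Definition prodR (l : list R) : R := fold_right Rmult 1 l.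

Definition res_bounds (k1 k2 d Cst xi lo hi : R) (zs : list R) (r : C) : Prop :=
  let A := sqrt (xi ^ 2 - k2 ^ 2) in
  let B := sqrt (xi ^ 2 - k1 ^ 2) in
  (k2 < Rabs xi ->
     (outside_region d lo hi ->
        Cmod r <= Cst / (1 + Rabs xi) * exp (- B * Rabs (hi - lo))) /\
     (~ outside_region d lo hi ->
        Cmod r <= Cst / (1 + Rabs xi) * exp (- A * Rabs (hi - lo)))) /\
  (k1 < Rabs xi < k2 ->
     Cmod r <= Cst * exp (- B * Rabs (hi - lo)) /
       (sqrt (Rabs (xi ^ 2 - k1 ^ 2)) *
        prodR (map (fun z => Rabs (xi ^ 2 - z ^ 2)) zs))) /\
  (Rabs xi < k1 -> Cmod r <= Cst / sqrt (Rabs (xi ^ 2 - k1 ^ 2))).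

(* Main.v *)
Require Import Defs.
From Stdlib Require Import Reals List Lra Lia Psatz ZArith.
From Coquelicot Require Import Coquelicot.
Open Scope R_scope.

Definition Cf (l t : R) : R :=
  if Rlt_dec 0 l then cos (sqrt l * t)
  else if Rlt_dec l 0 then (exp (sqrt (- l) * t) + exp (- (sqrt (- l) * t))) / 2
  else 1.
Definition Sf (l t : R) : R :=
  if Rlt_dec 0 l then sin (sqrt l * t) / sqrt l
  else if Rlt_dec l 0 then (exp (sqrt (- l) * t) - exp (- (sqrt (- l) * t))) / (2 * sqrt (- l))
  else t.

Lemma is_derive_eq (f : R -> R) (x l l' : R) : is_derive f x l -> l = l' -> is_derive f x l'.
Proof. intros H ->; exact H. Qed.

Lemma sqrt_sq_pos l : 0 < l -> sqrt l * sqrt l = l.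
Proof. intros; apply sqrt_sqrt; lra. Qed.

Lemma Cf_der l t0 t : is_derive (fun s => Cf l (s - t0)) t (- l * Sf l (t - t0)).
Proof.
  unfold Cf, Sf. destruct (Rlt_dec 0 l) as [h|h].
  - assert (hs : 0 < sqrt l) by (apply sqrt_lt_R0; lra).
    assert (e := sqrt_sq_pos l h).
    auto_derive. exact I.
    unfold Rminus. set (s := sqrt l) in *. rewrite <- e. field. lra.
  - destruct (Rlt_dec l 0) as [h'|h'].
    + assert (hs : 0 < sqrt (-l)) by (apply sqrt_lt_R0; lra).
      assert (e := sqrt_sq_pos (-l) ltac:(lra)).
      auto_derive. exact I.
      unfold Rminus. set (s := sqrt (-l)) in *. replace l with (- (s * s)) by lra. field. lra.
    + auto_derive. exact I. assert (l = 0) by lra. subst. ring.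
Qed.

Lemma Sf_der l t0 t : is_derive (fun s => Sf l (s - t0)) t (Cf l (t - t0)).
Proof.
  unfold Cf, Sf. destruct (Rlt_dec 0 l) as [h|h].
  - assert (hs : 0 < sqrt l) by (apply sqrt_lt_R0; lra).
    auto_derive. exact I. unfold Rminus. field. lra.
  - destruct (Rlt_dec l 0) as [h'|h'].
    + assert (hs : 0 < sqrt (-l)) by (apply sqrt_lt_R0; lra).
      auto_derive. exact I. unfold Rminus. field. lra.
    + auto_derive. exact I. ring.
Qed.

Lemma CS_id l t : Cf l t ^ 2 + l * Sf l t ^ 2 = 1.
Proof.
  unfold Cf, Sf. destruct (Rlt_dec 0 l) as [h|h].
  - assert (hs : 0 < sqrt l) by (apply sqrt_lt_R0; lra).
    assert (e := sqrt_sq_pos l h).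
    pose proof (sin2_cos2 (sqrt l * t)). unfold Rsqr in H.
    set (s := sqrt l) in *. rewrite <- e. field_simplify; [|lra]. lra.
  - destruct (Rlt_dec l 0) as [h'|h'].
    + assert (hs : 0 < sqrt (-l)) by (apply sqrt_lt_R0; lra).
      assert (e := sqrt_sq_pos (-l) ltac:(lra)).
      set (s := sqrt (-l)) in *. replace l with (- (s * s)) by lra.
      assert (H : exp (s * t) * exp (- (s * t)) = 1).
      { rewrite <- exp_plus. replace (s * t + - (s * t)) with 0 by ring. apply exp_0. }
      set (A := exp (s * t)) in *. set (A' := exp (- (s * t))) in *.
      transitivity (A * A'); [field; lra| exact H].
    + assert (l = 0) by lra. subst. ring.
Qed.

Lemma Cf_0 l : Cf l 0 = 1.
Proof. unfold Cf. rewrite !Rmult_0_r, Ropp_0, exp_0, cos_0. destruct Rlt_dec; [|destruct Rlt_dec]; lra. Qed.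
Lemma Sf_0 l : Sf l 0 = 0.
Proof. unfold Sf. rewrite !Rmult_0_r, Ropp_0, exp_0, sin_0. destruct Rlt_dec; [|destruct Rlt_dec]; lra. Qed.
Lemma Cf_even l t : Cf l (- t) = Cf l t.
Proof. unfold Cf. replace (sqrt l * - t) with (- (sqrt l * t)) by ring. rewrite cos_neg.
  replace (sqrt (-l) * - t) with (- (sqrt (-l) * t)) by ring. rewrite Ropp_involutive.
  destruct Rlt_dec; [|destruct Rlt_dec]; lra. Qed.
Lemma Sf_odd l t : Sf l (- t) = - Sf l t.
Proof. unfold Sf. replace (sqrt l * - t) with (- (sqrt l * t)) by ring. rewrite sin_neg.
  replace (sqrt (-l) * - t) with (- (sqrt (-l) * t)) by ring. rewrite Ropp_involutive.
  destruct Rlt_dec; [|destruct Rlt_dec]; [field|field|ring].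
  - apply Rgt_not_eq, sqrt_lt_R0; lra.
  - apply Rgt_not_eq, sqrt_lt_R0; lra.
Qed.

Lemma der_cont (f : R -> R) x l : is_derive f x l -> continuous f x.
Proof. intros H. apply (ex_derive_continuous (K:=R_AbsRing) (V:=R_NormedModule)). exists l. exact H. Qed.

Lemma cont_mult (f g : R -> R) x : continuous f x -> continuous g x -> continuous (fun y => f y * g y) x.
Proof. intros; apply (continuous_mult (U:=R_UniformSpace) (K:=R_AbsRing) f g x); auto. Qed.
Lemma cont_minus (f g : R -> R) x : continuous f x -> continuous g x -> continuous (fun y => f y - g y) x.
Proof. intros; apply (continuous_minus (U:=R_UniformSpace) (K:=R_AbsRing) (V:=R_NormedModule) f g x); auto. Qed.
Lemma cont_plus (f g : R -> R) x : continuous f x -> continuous g x -> continuous (fun y => f y + g y) x.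
Proof. intros; apply (continuous_plus (U:=R_UniformSpace) (K:=R_AbsRing) (V:=R_NormedModule) f g x); auto. Qed.
Lemma cont_const (c : R) x : continuous (fun _ : R => c) x.
Proof. apply continuous_const. Qed.
Lemma der_mult (f g : R -> R) x df dg : is_derive f x df -> is_derive g x dg ->
  is_derive (fun y => f y * g y) x (df * g x + f x * dg).
Proof. intros. apply (is_derive_mult (K:=R_AbsRing) f g x df dg); auto. intros; apply Rmult_comm. Qed.
Lemma der_minus (f g : R -> R) x df dg : is_derive f x df -> is_derive g x dg ->
  is_derive (fun y => f y - g y) x (df - dg).
Proof. intros. apply (is_derive_minus (K:=R_AbsRing) (V:=R_NormedModule) f g x df dg); auto. Qed.
Lemma der_plus (f g : R -> R) x df dg : is_derive f x df -> is_derive g x dg ->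
  is_derive (fun y => f y + g y) x (df + dg).
Proof. intros. apply (is_derive_plus (K:=R_AbsRing) (V:=R_NormedModule) f g x df dg); auto. Qed.
Lemma der_scal (f : R -> R) c x df : is_derive f x df -> is_derive (fun y => c * f y) x (c * df).
Proof. intros. apply (is_derive_scal f x c df); auto. Qed.

Lemma const_on (f : R -> R) a b :
  (forall x, a < x < b -> is_derive f x 0) ->
  (forall x, a <= x <= b -> continuous f x) ->
  forall t, a <= t <= b -> f t = f a.
Proof.
  intros Hd Hc t Ht.
  destruct (MVT_gen f a t (fun _ => 0)) as [c [_ Hc']].
  - intros x Hx. apply Hd. rewrite Rmin_left in Hx by lra. rewrite Rmax_right in Hx by lra. lra.
  - intros x Hx. apply continuity_pt_filterlim. apply Hc.
    rewrite Rmin_left in Hx by lra. rewrite Rmax_right in Hx by lra. lra.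
  - lra.
Qed.

Lemma const_on2 (f : R -> R) a b :
  (forall x, a < x < b -> is_derive f x 0) ->
  (forall x, a <= x <= b -> continuous f x) ->
  forall s t, a <= s <= b -> a <= t <= b -> f t = f s.
Proof. intros Hd Hc s t Hs Ht. rewrite (const_on f a b Hd Hc t Ht), (const_on f a b Hd Hc s Hs). auto. Qed.

Lemma repr (f df : R -> R) l a b t0 :
  (forall x, is_derive f x (df x)) -> (forall x, continuous df x) ->
  (forall x, a < x < b -> is_derive df x (- l * f x)) -> a <= t0 <= b ->
  forall t, a <= t <= b ->
  f t = f t0 * Cf l (t - t0) + df t0 * Sf l (t - t0) /\
  df t = - l * f t0 * Sf l (t - t0) + df t0 * Cf l (t - t0).
Proof.
  intros Hf Hdc Hdd Ht0 t Ht.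
  set (E1 := fun s => f s * (- l * Sf l (s - t0)) - df s * Cf l (s - t0)).
  set (E2 := fun s => f s * Cf l (s - t0) - df s * Sf l (s - t0)).
  assert (cC : forall x, continuous (fun s => Cf l (s - t0)) x) by (intros; eapply der_cont; apply Cf_der).
  assert (cS : forall x, continuous (fun s => Sf l (s - t0)) x) by (intros; eapply der_cont; apply Sf_der).
  assert (cf : forall x, continuous f x) by (intros; eapply der_cont; apply Hf).
  assert (e1 : E1 t = E1 t0).
  { apply (const_on2 E1 a b); auto.
    - intros x Hx. unfold E1. eapply is_derive_eq.
      apply der_minus. apply der_mult. apply Hf. apply der_scal. apply Sf_der.
      apply der_mult. apply Hdd; auto. apply Cf_der. cbv beta. ring.
    - intros x Hx. unfold E1. apply cont_minus; apply cont_mult; auto.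
      apply (cont_mult (fun _ => - l)). apply cont_const. auto. }
  assert (e2 : E2 t = E2 t0).
  { apply (const_on2 E2 a b); auto.
    - intros x Hx. unfold E2. eapply is_derive_eq.
      apply der_minus. apply der_mult. apply Hf. apply Cf_der.
      apply der_mult. apply Hdd; auto. apply Sf_der. cbv beta. ring.
    - intros x Hx. unfold E2. apply cont_minus; apply cont_mult; auto. }
  unfold E1, E2 in e1, e2. rewrite Rminus_diag, Cf_0, Sf_0 in e1, e2.
  assert (HI := CS_id l (t - t0)).
  set (C := Cf l (t - t0)) in *. set (S := Sf l (t - t0)) in *.
  assert (h1 : df t0 = - (f t * (- l * S) - df t * C)) by lra.
  assert (h2 : f t0 = f t * C - df t * S) by lra.
  rewrite h1, h2. split.
  - transitivity (f t * (C^2 + l*S^2)); [rewrite HI; ring | ring].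
  - transitivity (df t * (C^2 + l*S^2)); [rewrite HI; ring | ring].
Qed.

Definition rsol (k1 k2 d xi : R) (f df : R -> R) : Prop :=
  (forall x, is_derive f x (df x)) /\ (forall x, continuous df x) /\
  (forall x, x <> - d -> x <> d ->
     is_derive df x (- (k1 ^ 2 + qpot k1 k2 d x - xi ^ 2) * f x)).

Lemma der_fst (u : R -> C) x l : is_derive u x l -> is_derive (fun t => fst (u t)) x (fst l).
Proof.
  intros H. unfold is_derive in *.
  apply (filterdiff_comp' u fst x (fun y => scal y l) fst H).
  apply filterdiff_linear. apply is_linear_fst.
Qed.
Lemma der_snd (u : R -> C) x l : is_derive u x l -> is_derive (fun t => snd (u t)) x (snd l).
Proof.
  intros H. unfold is_derive in *.
  apply (filterdiff_comp' u snd x (fun y => scal y l) snd H).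
  apply filterdiff_linear. apply is_linear_snd.
Qed.
Lemma cont_fst (u : R -> C) x : continuous u x -> continuous (fun t => fst (u t)) x.
Proof. intros H. apply (continuous_comp u fst x H). destruct (u x). apply continuous_fst. Qed.
Lemma cont_snd (u : R -> C) x : continuous u x -> continuous (fun t => snd (u t)) x.
Proof. intros H. apply (continuous_comp u snd x H). destruct (u x). apply continuous_snd. Qed.

Lemma sol_fst k1 k2 d xi u du : is_sol k1 k2 d xi u du ->
  rsol k1 k2 d xi (fun t => fst (u t)) (fun t => fst (du t)).
Proof.
  intros [H1 [H2 H3]]. split; [|split].
  - intros x. apply der_fst, H1.
  - intros x. apply cont_fst, H2.
  - intros x h1 h2. eapply is_derive_eq. apply der_fst, H3; auto.
    simpl. ring.
Qed.
Lemma sol_snd k1 k2 d xi u du : is_sol k1 k2 d xi u du ->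
  rsol k1 k2 d xi (fun t => snd (u t)) (fun t => snd (du t)).
Proof.
  intros [H1 [H2 H3]]. split; [|split].
  - intros x. apply der_snd, H1.
  - intros x. apply cont_snd, H2.
  - intros x h1 h2. eapply is_derive_eq. apply der_snd, H3; auto.
    simpl. ring.
Qed.

Lemma qpot_in k1 k2 d x : - d < x < d -> qpot k1 k2 d x = k2 ^ 2 - k1 ^ 2.
Proof. intros h. unfold qpot. destruct Rle_dec; [destruct Rle_dec|]; lra. Qed.
Lemma qpot_out k1 k2 d x : x < - d \/ d < x -> qpot k1 k2 d x = 0.
Proof. intros h. unfold qpot. destruct Rle_dec; [destruct Rle_dec|]; lra. Qed.

Section S.
Variables k1 k2 d xi : R.
Hypothesis hd : 0 < d.

Lemma rs_cont f df : rsol k1 k2 d xi f df -> forall x, continuous f x.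
Proof. intros [H _] x. eapply der_cont. apply H. Qed.

Lemma rs_in f df : rsol k1 k2 d xi f df -> forall t0 t, -d <= t0 <= d -> -d <= t <= d ->
  f t = f t0 * Cf (k2^2 - xi^2) (t - t0) + df t0 * Sf (k2^2 - xi^2) (t - t0) /\
  df t = - (k2^2 - xi^2) * f t0 * Sf (k2^2 - xi^2) (t - t0) + df t0 * Cf (k2^2 - xi^2) (t - t0).
Proof.
  intros [H1 [H2 H3]] t0 t h0 h. apply (repr f df _ (-d) d); auto.
  intros x hx. eapply is_derive_eq. apply H3; lra. rewrite qpot_in by lra. ring.
Qed.

Lemma rs_right f df : rsol k1 k2 d xi f df -> forall t, d <= t ->
  f t = f d * Cf (k1^2 - xi^2) (t - d) + df d * Sf (k1^2 - xi^2) (t - d) /\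
  df t = - (k1^2 - xi^2) * f d * Sf (k1^2 - xi^2) (t - d) + df d * Cf (k1^2 - xi^2) (t - d).
Proof.
  intros [H1 [H2 H3]] t h. apply (repr f df _ d t); auto; try lra.
  intros x hx. eapply is_derive_eq. apply H3; lra. rewrite qpot_out by lra. ring.
Qed.

Lemma rs_left f df : rsol k1 k2 d xi f df -> forall t, t <= - d ->
  f t = f (-d) * Cf (k1^2 - xi^2) (t + d) + df (-d) * Sf (k1^2 - xi^2) (t + d) /\
  df t = - (k1^2 - xi^2) * f (-d) * Sf (k1^2 - xi^2) (t + d) + df (-d) * Cf (k1^2 - xi^2) (t + d).
Proof.
  intros [H1 [H2 H3]] t h. replace (t + d) with (t - - d) by ring.
  apply (repr f df _ t (-d)); auto; try lra.
  intros x hx. eapply is_derive_eq. apply H3; lra. rewrite qpot_out by lra. ring.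
Qed.

Lemma wr_const f df g dg : rsol k1 k2 d xi f df -> rsol k1 k2 d xi g dg ->
  forall t, f t * dg t - df t * g t = f 0 * dg 0 - df 0 * g 0.
Proof.
  intros Hf Hg.
  assert (cf := rs_cont _ _ Hf). assert (cg := rs_cont _ _ Hg).
  destruct Hf as [F1 [F2 F3]]. destruct Hg as [G1 [G2 G3]].
  set (E := fun s => f s * dg s - df s * g s).
  assert (Hd : forall x, x <> -d -> x <> d -> is_derive E x 0).
  { intros x h1 h2. unfold E. eapply is_derive_eq.
    apply der_minus; apply der_mult; auto. ring. }
  assert (Hc : forall x, continuous E x).
  { intros x. unfold E. apply cont_minus; apply cont_mult; auto. }
  assert (Hin : forall t, -d <= t <= d -> E t = E 0).
  { intros t ht. apply (const_on2 E (-d) d); auto; try lra.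
    intros x hx; apply Hd; lra. }
  intros t. fold (E t). fold (E 0).
  destruct (Rle_dec t d); [destruct (Rle_dec (-d) t)|].
  - apply Hin; lra.
  - rewrite <- (Hin (-d)) by lra. apply (const_on2 E t (-d)); auto; try lra.
    intros x hx; apply Hd; lra.
  - rewrite <- (Hin d) by lra. apply (const_on2 E d t); auto; try lra.
    intros x hx; apply Hd; lra.
Qed.

Lemma rs_zero f df : rsol k1 k2 d xi f df -> f d = 0 -> df d = 0 -> forall t, f t = 0.
Proof.
  intros H h1 h2.
  assert (Hin : forall t, -d <= t <= d -> f t = 0 /\ df t = 0).
  { intros t ht. destruct (rs_in f df H d t) as [e1 e2]; try lra.
    rewrite e1, e2, h1, h2. split; ring. }
  intros t. destruct (Rle_dec t d); [destruct (Rle_dec (-d) t)|].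
  - apply Hin; lra.
  - destruct (rs_left f df H t) as [e1 _]; try lra.
    destruct (Hin (-d)) as [a1 a2]; try lra. rewrite e1, a1, a2. ring.
  - destruct (rs_right f df H t) as [e1 _]; try lra.
    rewrite e1, h1, h2. ring.
Qed.

Lemma rs_refl f df g dg : rsol k1 k2 d xi f df -> rsol k1 k2 d xi g dg ->
  g (-d) = f d -> dg (-d) = - df d -> (forall t, t < - d -> g t = f (- t)) ->
  forall t, g t = f (- t).
Proof.
  intros Hf Hg e1 e2 Hl.
  assert (Hin : forall t, -d <= t <= d -> g t = f (-t) /\ dg t = - df (-t)).
  { intros t ht.
    destruct (rs_in g dg Hg (-d) t) as [a1 a2]; try lra.
    destruct (rs_in f df Hf d (-t)) as [b1 b2]; try lra.
    rewrite a1, a2, b1, b2, e1, e2.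
    replace (- t - d) with (- (t - - d)) by ring.
    rewrite Cf_even, Sf_odd. split; ring. }
  intros t. destruct (Rle_dec t d); [destruct (Rle_dec (-d) t)|].
  - apply Hin; lra.
  - apply Hl; lra.
  - destruct (rs_right g dg Hg t) as [a1 _]; try lra.
    destruct (rs_left f df Hf (-t)) as [b1 _]; try lra.
    destruct (Hin d) as [c1 c2]; try lra.
    rewrite a1, b1, c1, c2. replace (- t + d) with (- (t - d)) by ring.
    rewrite Cf_even, Sf_odd. replace (- d) with (- d) by ring. ring.
Qed.

End S.

Lemma right_val (f h : R -> R) a : continuous f a -> continuous h a ->
  (forall x, a < x -> f x = h x) -> f a = h a.
Proof.
  intros cf ch H.
  apply continuity_pt_filterlim in cf. apply continuity_pt_filterlim in ch.
  destruct (Req_dec (f a) (h a)) as [e|ne]; auto. exfalso.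
  set (e := Rabs (f a - h a)).
  assert (he : 0 < e) by (apply Rabs_pos_lt; lra).
  destruct (cf (e/2) ltac:(lra)) as [a1 [ha1 H1]].
  destruct (ch (e/2) ltac:(lra)) as [a2 [ha2 H2]].
  set (x := a + Rmin a1 a2 / 2).
  assert (hm : 0 < Rmin a1 a2) by (apply Rmin_glb_lt; lra).
  assert (dx : R_dist x a < Rmin a1 a2) by (unfold R_dist, x; rewrite Rabs_pos_eq; lra).
  assert (Dx : D_x no_cond a x) by (split; [exact I| unfold x; lra]).
  assert (q1 := H1 x (conj Dx (Rlt_le_trans _ _ _ dx (Rmin_l _ _)))).
  assert (q2 := H2 x (conj Dx (Rlt_le_trans _ _ _ dx (Rmin_r _ _)))).
  rewrite (H x) in q1 by (unfold x; lra). unfold R_dist in *. simpl in q1, q2. unfold Rdist in q1, q2.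
  assert (Rabs (f a - h a) <= Rabs (h x - f a) + Rabs (h x - h a)).
  { replace (f a - h a) with (- (h x - f a) + (h x - h a)) by ring.
    eapply Rle_trans. apply Rabs_triang. rewrite Rabs_Ropp. lra. }
  fold e in H0. lra.
Qed.

Lemma left_val (f h : R -> R) a : continuous f a -> continuous h a ->
  (forall x, x < a -> f x = h x) -> f a = h a.
Proof.
  intros cf ch H.
  apply continuity_pt_filterlim in cf. apply continuity_pt_filterlim in ch.
  destruct (Req_dec (f a) (h a)) as [e|ne]; auto. exfalso.
  set (e := Rabs (f a - h a)).
  assert (he : 0 < e) by (apply Rabs_pos_lt; lra).
  destruct (cf (e/2) ltac:(lra)) as [a1 [ha1 H1]].
  destruct (ch (e/2) ltac:(lra)) as [a2 [ha2 H2]].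
  set (x := a - Rmin a1 a2 / 2).
  assert (hm : 0 < Rmin a1 a2) by (apply Rmin_glb_lt; lra).
  assert (dx : R_dist x a < Rmin a1 a2) by (unfold R_dist, x; rewrite Rabs_left; lra).
  assert (Dx : D_x no_cond a x) by (split; [exact I| unfold x; lra]).
  assert (q1 := H1 x (conj Dx (Rlt_le_trans _ _ _ dx (Rmin_l _ _)))).
  assert (q2 := H2 x (conj Dx (Rlt_le_trans _ _ _ dx (Rmin_r _ _)))).
  rewrite (H x) in q1 by (unfold x; lra). unfold R_dist in *. simpl in q1, q2. unfold Rdist in q1, q2.
  assert (Rabs (f a - h a) <= Rabs (h x - f a) + Rabs (h x - h a)).
  { replace (f a - h a) with (- (h x - f a) + (h x - h a)) by ring.
    eapply Rle_trans. apply Rabs_triang. rewrite Rabs_Ropp. lra. }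
  fold e in H0. lra.
Qed.

Lemma der_agree (f df h dh : R -> R) a :
  (forall x, is_derive f x (df x)) -> (forall x, is_derive h x (dh x)) ->
  (forall x, a < x -> f x = h x) -> forall x, a < x -> df x = dh x.
Proof.
  intros Hf Hh E x hx.
  assert (is_derive h x (df x)).
  { apply (is_derive_ext_loc f h x (df x)); auto.
    exists (mkposreal (x - a) ltac:(lra)). intros y hy. apply E.
    unfold ball in hy; simpl in hy; unfold AbsRing_ball, abs, minus, plus, opp in hy; simpl in hy.
    apply Rabs_lt_between in hy. lra. }
  pose proof (is_derive_unique h x (df x) H) as u1.
  pose proof (is_derive_unique h x (dh x) (Hh x)) as u2. congruence.
Qed.
Lemma der_agree_l (f df h dh : R -> R) a :
  (forall x, is_derive f x (df x)) -> (forall x, is_derive h x (dh x)) ->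
  (forall x, x < a -> f x = h x) -> forall x, x < a -> df x = dh x.
Proof.
  intros Hf Hh E x hx.
  assert (is_derive h x (df x)).
  { apply (is_derive_ext_loc f h x (df x)); auto.
    exists (mkposreal (a - x) ltac:(lra)). intros y hy. apply E.
    unfold ball in hy; simpl in hy; unfold AbsRing_ball, abs, minus, plus, opp in hy; simpl in hy.
    apply Rabs_lt_between in hy. lra. }
  pose proof (is_derive_unique h x (df x) H) as u1.
  pose proof (is_derive_unique h x (dh x) (Hh x)) as u2. congruence.
Qed.

Lemma exp_mono x y : x <= y -> exp x <= exp y.
Proof. intros h. destruct (Rle_lt_or_eq_dec _ _ h) as [h'|<-]. left; apply exp_increasing; auto. lra. Qed.

Lemma exp_pos' x : 0 <= exp x. Proof. left; apply exp_pos. Qed.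

Section Gen.
Variables (F G : R -> R) (A B d W Ga : R).
Hypotheses (hd : 0 < d) (hA : 0 < A) (hAB : A <= B) (hGa : 0 <= Ga).
Hypothesis HR : forall t, d <= t -> F t = exp (- (B * t)).
Hypothesis HI : forall t, - d <= t <= d -> F t = exp (- (B * d)) * G (d - t).
Hypothesis HL : forall t, t <= - d -> F t = F (- d) * exp (- (B * (- d - t)))
   - W * exp (B * d) * ((exp (B * (- d - t)) - exp (- (B * (- d - t)))) / 2) / B.
Hypothesis HG : forall s, 0 <= s <= 2 * d -> Rabs (G s) <= Ga * exp (A * s).

Let X := exp (- (2 * (B - A) * d)).

Lemma hB : 0 < B. Proof. lra. Qed.

Lemma L_pp a1 a2 : d <= a1 -> d <= a2 -> Rabs (F a1 * F a2) = exp (- (B * (a1 + a2))).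
Proof.
  intros h1 h2. rewrite HR, HR by auto. rewrite <- exp_plus, Rabs_pos_eq by apply exp_pos'.
  f_equal; ring.
Qed.

Lemma in_bound t : - d <= t <= d -> Rabs (F t) <= Ga * exp (- (B * d) + A * (d - t)).
Proof.
  intros h. rewrite HI by auto. rewrite Rabs_mult, Rabs_pos_eq by apply exp_pos'.
  rewrite exp_plus. assert (q := HG (d - t) ltac:(lra)).
  pose proof (exp_pos (- (B * d))). nra.
Qed.

Lemma L_0p a1 a2 : - d <= a1 <= d -> d <= a2 -> Rabs (F a1 * F a2) <= Ga * exp (- (A * (a1 + a2))) * X.
Proof.
  intros h1 h2. rewrite Rabs_mult. rewrite (HR a2) by auto. rewrite (Rabs_pos_eq (exp _)) by apply exp_pos'.
  eapply Rle_trans. apply Rmult_le_compat_r. apply exp_pos'. apply in_bound; auto.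
  unfold X. rewrite Rmult_assoc, Rmult_assoc, <- !exp_plus. apply Rmult_le_compat_l; auto.
  apply exp_mono. nra.
Qed.

Lemma L_00 a1 a2 : - d <= a1 <= d -> - d <= a2 <= d -> Rabs (F a1 * F a2) <= Ga ^ 2 * exp (- (A * (a1 + a2))) * X.
Proof.
  intros h1 h2. rewrite Rabs_mult.
  eapply Rle_trans. apply Rmult_le_compat; try apply Rabs_pos; apply in_bound; eauto.
  unfold X. replace (Ga * exp (- (B * d) + A * (d - a1)) * (Ga * exp (- (B * d) + A * (d - a2))))
    with (Ga ^ 2 * (exp (- (B * d) + A * (d - a1)) * exp (- (B * d) + A * (d - a2)))) by ring.
  rewrite Rmult_assoc, <- !exp_plus. apply Rmult_le_compat_l. nra.
  apply exp_mono. nra.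
Qed.

Lemma L_mp a1 a2 : a1 <= - d -> d <= a2 ->
  Rabs (F a1 * F a2) <= Ga * exp (- (B * (a1 + a2))) * X + Rabs W * exp (- (B * (a1 + a2))) / (2 * B).
Proof.
  intros h1 h2. rewrite Rabs_mult. rewrite (HR a2) by auto. rewrite (Rabs_pos_eq (exp (- (B * a2)))) by apply exp_pos'.
  rewrite (HL a1) by auto.
  assert (hFd : Rabs (F (- d)) <= Ga * exp (- (B * d) + A * (2 * d))).
  { eapply Rle_trans. apply in_bound. lra. replace (d - - d) with (2 * d) by ring. lra. }
  set (tau := - d - a1).
  assert (ht : 0 <= tau) by (unfold tau; lra).
  assert (hs1 : 0 <= (exp (B * tau) - exp (- (B * tau))) / 2).
  { assert (exp (- (B * tau)) <= exp (B * tau)) by (apply exp_mono; nra). lra. }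
  assert (hs2 : (exp (B * tau) - exp (- (B * tau))) / 2 <= exp (B * tau) / 2).
  { pose proof (exp_pos (- (B * tau))). lra. }
  set (s := (exp (B * tau) - exp (- (B * tau))) / 2) in *.
  eapply Rle_trans. apply Rmult_le_compat_r. apply exp_pos'.
  eapply Rle_trans. apply Rabs_triang. rewrite Rabs_Ropp.
  apply Rplus_le_compat.
  { rewrite Rabs_mult, (Rabs_pos_eq (exp _)) by apply exp_pos'.
    apply Rmult_le_compat_r. apply exp_pos'. exact hFd. }
  { unfold Rdiv. rewrite !Rabs_mult. rewrite (Rabs_pos_eq (exp _)) by apply exp_pos'.
    rewrite (Rabs_pos_eq s) by auto. rewrite (Rabs_pos_eq (/ B)) by (left; apply Rinv_0_lt_compat; lra).
    apply Rmult_le_compat_r. left; apply Rinv_0_lt_compat; lra.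
    apply Rmult_le_compat_l. apply Rmult_le_pos. apply Rabs_pos. apply exp_pos'. exact hs2. }
  rewrite Rmult_plus_distr_r. apply Rplus_le_compat.
  - unfold X. rewrite !Rmult_assoc. rewrite <- !exp_plus. apply Rmult_le_compat_l; auto.
    apply exp_mono. unfold tau. nra.
  - unfold Rdiv. replace (Rabs W * exp (B * d) * (exp (B * tau) * / 2) * / B * exp (- (B * a2)))
      with (Rabs W * (exp (B * d) * exp (B * tau) * exp (- (B * a2))) * / (2 * B)) by (field; lra).
    rewrite <- !exp_plus. right. f_equal. f_equal. f_equal. unfold tau. ring.
Qed.


Lemma X_pos : 0 <= X. Proof. apply exp_pos'. Qed.

Lemma pair_out a1 a2 : 0 < a1 + a2 -> ((d < a1 /\ d < a2) \/ a1 < - d \/ a2 < - d) ->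
  Rabs (F a1 * F a2) <= Ga * exp (- (B * (a1 + a2))) * X + exp (- (B * (a1 + a2)))
    + Rabs W * exp (- (B * (a1 + a2))) / (2 * B).
Proof.
  intros hT [[h1 h2]|[h|h]].
  - rewrite L_pp by lra. pose proof X_pos. pose proof (exp_pos (- (B * (a1 + a2)))).
    assert (0 <= Rabs W * exp (- (B * (a1 + a2))) / (2 * B)).
    { apply Rmult_le_pos. apply Rmult_le_pos. apply Rabs_pos. lra. left; apply Rinv_0_lt_compat; lra. }
    assert (0 <= Ga * exp (- (B * (a1 + a2))) * X) by (apply Rmult_le_pos; [apply Rmult_le_pos|]; lra).
    lra.
  - pose proof (L_mp a1 a2 ltac:(lra) ltac:(lra)). pose proof (exp_pos (- (B * (a1 + a2)))). lra.
  - rewrite Rmult_comm. rewrite (Rplus_comm a1 a2).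
    pose proof (L_mp a2 a1 ltac:(lra) ltac:(lra)). pose proof (exp_pos (- (B * (a2 + a1)))). lra.
Qed.

Lemma pair_all a1 a2 : 0 < a1 + a2 ->
  Rabs (F a1 * F a2) <= (Ga ^ 2 + Ga) * exp (- (A * (a1 + a2))) * X + exp (- (B * (a1 + a2)))
    + Rabs W * exp (- (B * (a1 + a2))) / (2 * B).
Proof.
  intros hT.
  assert (eAB : exp (- (B * (a1 + a2))) <= exp (- (A * (a1 + a2)))) by (apply exp_mono; nra).
  pose proof X_pos. pose proof (exp_pos (- (B * (a1 + a2)))). pose proof (exp_pos (- (A * (a1 + a2)))).
  assert (hW : 0 <= Rabs W * exp (- (B * (a1 + a2))) / (2 * B)).
  { apply Rmult_le_pos. apply Rmult_le_pos. apply Rabs_pos. lra. left; apply Rinv_0_lt_compat; lra. }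
  assert (g2 : 0 <= Ga ^ 2) by nra.
  assert (t1 : 0 <= Ga ^ 2 * exp (- (A * (a1 + a2))) * X) by (apply Rmult_le_pos; [apply Rmult_le_pos|]; lra).
  assert (t2 : 0 <= Ga * exp (- (A * (a1 + a2))) * X) by (apply Rmult_le_pos; [apply Rmult_le_pos|]; lra).
  assert (t3 : Ga * exp (- (B * (a1 + a2))) * X <= Ga * exp (- (A * (a1 + a2))) * X).
  { apply Rmult_le_compat_r; auto. apply Rmult_le_compat_l; auto. }
  assert (e : (Ga ^ 2 + Ga) * exp (- (A * (a1 + a2))) * X = Ga ^ 2 * exp (- (A * (a1 + a2))) * X + Ga * exp (- (A * (a1 + a2))) * X) by ring.
  rewrite e.
  destruct (Rle_dec a1 (- d)) as [h1|h1].
  { pose proof (L_mp a1 a2 h1 ltac:(lra)). lra. }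
  destruct (Rle_dec a2 (- d)) as [h2|h2].
  { rewrite Rmult_comm. rewrite (Rplus_comm a1 a2) in *.
    pose proof (L_mp a2 a1 h2 ltac:(lra)). lra. }
  destruct (Rle_dec a1 d) as [h3|h3]; destruct (Rle_dec a2 d) as [h4|h4].
  - pose proof (L_00 a1 a2 ltac:(lra) ltac:(lra)). lra.
  - pose proof (L_0p a1 a2 ltac:(lra) ltac:(lra)). lra.
  - rewrite Rmult_comm. rewrite (Rplus_comm a1 a2) in *.
    pose proof (L_0p a2 a1 ltac:(lra) ltac:(lra)). lra.
  - rewrite L_pp by lra. lra.
Qed.

End Gen.

Lemma comb (P W X B eA eB K1 E : R) : 0 < B -> 0 < X -> X * B <= Rabs W -> / X <= E ->
  0 <= K1 -> 0 <= eB <= eA -> P <= K1 * eA * X + eB + Rabs W * eB / (2 * B) ->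
  P / Rabs W <= (K1 + E + 1) * eA / B.
Proof.
  intros hB hX hW hE hK [h1 h2] hP.
  assert (hW0 : 0 < Rabs W) by nra.
  apply Rmult_le_reg_r with (Rabs W); auto.
  replace (P / Rabs W * Rabs W) with P by (field; lra).
  eapply Rle_trans; [exact hP|].
  assert (E1 : K1 * eA * X <= K1 * eA / B * Rabs W).
  { replace (K1 * eA * X) with (K1 * eA / B * (X * B)) by (field; lra).
    apply Rmult_le_compat_l; auto. apply Rmult_le_pos; [nra| left; apply Rinv_0_lt_compat; lra]. }
  assert (E2 : eB <= E * eA / B * Rabs W).
  { assert (1 <= E * X) by (apply Rmult_le_reg_r with (/ X); [apply Rinv_0_lt_compat; lra|];
      rewrite Rmult_assoc, Rinv_r, Rmult_1_l, Rmult_1_r by lra; lra).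
    assert (eB <= E * X * eA) by nra.
    replace (E * eA / B * Rabs W) with (E * eA * (Rabs W / B)) by (field; lra).
    assert (X <= Rabs W / B) by (apply Rmult_le_reg_r with B; auto; replace (Rabs W / B * B) with (Rabs W) by (field; lra); lra).
    assert (0 <= E * eA) by nra. nra. }
  assert (E3 : Rabs W * eB / (2 * B) <= eA / B * Rabs W).
  { replace (Rabs W * eB / (2 * B)) with (eB / 2 / B * Rabs W) by (field; lra).
    apply Rmult_le_compat_r; [lra|]. unfold Rdiv. apply Rmult_le_compat_r. left; apply Rinv_0_lt_compat; lra. lra. }
  replace ((K1 + E + 1) * eA / B * Rabs W) with (K1 * eA / B * Rabs W + E * eA / B * Rabs W + eA / B * Rabs W) by (field; lra).
  lra.
Qed.

Lemma c_alg1 K p q r s C S : 0 < K -> p * s - r * q = K -> C ^ 2 + K ^ 2 * S ^ 2 = 1 ->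
  K ^ 2 * ((p * C + r * S) ^ 2 + (q * C + s * S) ^ 2) <= (r - K * q) ^ 2 + (s + K * p) ^ 2.
Proof.
  intros hK hf hc.
  assert (e : (r - K * q) ^ 2 + (s + K * p) ^ 2 - K ^ 2 * ((p * C + r * S) ^ 2 + (q * C + s * S) ^ 2)
     = (K * p * (K * S) - r * C) ^ 2 + (K * q * (K * S) - s * C) ^ 2 + 2 * K ^ 2).
  { replace (K ^ 2 * ((p * C + r * S) ^ 2 + (q * C + s * S) ^ 2)) with
      ((K*p*C + r * (K*S)) ^ 2 + (K*q*C + s*(K*S)) ^ 2) by ring.
    replace ((r - K * q) ^ 2 + (s + K * p) ^ 2) with
      ((r^2 + s^2 + K^2*(p^2+q^2)) * (C^2 + K^2*S^2) + 2 * K * (p * s - r * q)) by (rewrite hc; ring).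
    rewrite hf. ring. }
  assert (0 <= (K * p * (K * S) - r * C) ^ 2) by apply pow2_ge_0.
  assert (0 <= (K * q * (K * S) - s * C) ^ 2) by apply pow2_ge_0.
  assert (0 <= K ^ 2) by apply pow2_ge_0. lra.
Qed.

Lemma c_alg2 K p q r s : 0 < K -> p * s - r * q = K -> 4 * K ^ 2 <= (r - K * q) ^ 2 + (s + K * p) ^ 2.
Proof.
  intros hK hf.
  assert ((r - K * q) ^ 2 + (s + K * p) ^ 2 = (r + K * q) ^ 2 + (s - K * p) ^ 2 + 4 * K * (p * s - r * q)) by ring.
  rewrite hf in H. assert (0 <= (r + K * q) ^ 2) by apply pow2_ge_0.
  assert (0 <= (s - K * p) ^ 2) by apply pow2_ge_0. nra.
Qed.

Lemma Rabs_sin_le y : Rabs (sin y) <= Rabs y.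
Proof.
  destruct (MVT_gen sin 0 y cos) as [c [_ hc]].
  - intros x _. apply is_derive_Reals. apply derivable_pt_lim_sin.
  - intros x _. apply continuity_sin.
  - rewrite sin_0, Rminus_0_r, Rminus_0_r in hc. rewrite hc, Rabs_mult.
    pose proof (COS_bound c). assert (Rabs (cos c) <= 1) by (apply Rabs_le; lra).
    pose proof (Rabs_pos y). nra.
Qed.

Lemma sin_lb3 y : 0 <= y <= PI / 2 -> y / 3 <= sin y.
Proof.
  intros h. pose proof PI_4. destruct (pre_sin_bound y 0) as [h1 _]; try lra.
  unfold sin_approx, sin_term in h1. simpl in h1.
  assert (y * y <= 4) by nra. nra.
Qed.

Section RegA.
Variables (A B ka d : R).
Hypotheses (hA : 0 < A) (hka : 0 < ka) (hd : 0 < d) (hB : 0 < B) (hBA : B ^ 2 = A ^ 2 + ka ^ 2).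

Lemma ch_sh_facts s : 0 <= s ->
  1 <= exp (A * s) /\ 0 < exp (- (A * s)) /\ exp (- (A * s)) <= 1 /\
  exp (A * s) * exp (- (A * s)) = 1 /\ exp (A * s) - exp (- (A * s)) <= 2 * A * s * exp (A * s).
Proof.
  intros hs.
  assert (e1 : exp (A * s) * exp (- (A * s)) = 1) by (rewrite <- exp_plus; replace (A * s + - (A * s)) with 0 by ring; apply exp_0).
  assert (g1 : 1 <= exp (A * s)) by (rewrite <- exp_0; apply exp_mono; nra).
  assert (g2 : exp (- (A * s)) <= 1) by (rewrite <- exp_0; apply exp_mono; nra).
  pose proof (exp_pos (- (A * s))).
  assert (e2 : exp (- (A * s)) * exp (- (A * s)) = exp (- 2 * A * s)) by (rewrite <- exp_plus; f_equal; ring).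
  pose proof (exp_ineq1_le (- 2 * A * s)).
  repeat split; try lra.
  assert (0 < exp (A * s)) by lra. nra.
Qed.

Lemma B_ge_A : A <= B. Proof. nra. Qed.

Lemma a_G_bound s : 0 <= s <= 2 * d ->
  0 <= (exp (A * s) + exp (- (A * s))) / 2 + B * ((exp (A * s) - exp (- (A * s))) / (2 * A)) <=
  (2 + 4 * ka * d) * exp (A * s).
Proof.
  intros hs. destruct (ch_sh_facts s) as [f1 [f2 [f3 [f4 f5]]]]; try lra.
  set (e := exp (A * s)) in *. set (e' := exp (- (A * s))) in *.
  assert (hsh : 0 <= e - e') by lra.
  assert (hAB := B_ge_A).
  split.
  - assert (0 <= B * ((e - e') / (2 * A))) by (apply Rmult_le_pos; [lra| apply Rmult_le_pos; [lra| left; apply Rinv_0_lt_compat; lra]]).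
    lra.
  - destruct (Rle_dec ka A) as [h|h].
    + assert (B <= 2 * A) by nra.
      (* ch + (B/A) sh <= (B/A) e <= 2 e *)
      assert (B * ((e - e') / (2 * A)) <= (e - e')) .
      { unfold Rdiv. rewrite Rinv_mult. 
        replace (B * ((e - e') * (/ 2 * / A))) with ((B / A) * ((e - e') / 2)) by (field; lra).
        assert (B / A <= 2) by (apply Rmult_le_reg_r with A; [lra|]; unfold Rdiv; rewrite Rmult_assoc, Rinv_l; lra).
        nra. }
      assert (0 <= ka * d) by nra. nra.
    + assert (B < 2 * ka) by nra.
      assert (B * ((e - e') / (2 * A)) <= B * s * e).
      { replace (B * ((e - e') / (2 * A))) with (B * (e - e') / (2 * A)) by (field; lra).
        apply Rmult_le_reg_r with (2 * A); [lra|]. unfold Rdiv. rewrite Rmult_assoc, Rinv_l by lra. nra. }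
      assert (B * s * e <= 4 * ka * d * e) by (assert (B * s <= 4 * ka * d) by nra; nra).
      nra.
Qed.

Lemma a_Gd_lower : exp (A * d) <= (exp (A * d) + exp (- (A * d))) / 2 + B * ((exp (A * d) - exp (- (A * d))) / (2 * A)).
Proof.
  destruct (ch_sh_facts d) as [f1 [f2 [f3 [f4 f5]]]]; try lra.
  set (e := exp (A * d)) in *. set (e' := exp (- (A * d))) in *.
  assert (hAB := B_ge_A).
  assert ((e - e') / 2 <= B * ((e - e') / (2 * A))).
  { replace (B * ((e - e') / (2 * A))) with ((B / A) * ((e - e') / 2)) by (field; lra).
    assert (1 <= B / A) by (apply Rmult_le_reg_r with A; [lra|]; unfold Rdiv; rewrite Rmult_assoc, Rinv_l; lra).
    assert (0 <= (e - e') / 2) by lra. nra. }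
  lra.
Qed.

Lemma a_Gp_lower : B * exp (A * d) / 2 <= B * ((exp (A * d) + exp (- (A * d))) / 2) + A * ((exp (A * d) - exp (- (A * d))) / 2).
Proof.
  destruct (ch_sh_facts d) as [f1 [f2 [f3 [f4 f5]]]]; try lra.
  set (e := exp (A * d)) in *. set (e' := exp (- (A * d))) in *.
  nra.
Qed.

End RegA.

Definition Psi (ka d p : R) := 2 * (ka * d * sin p + p).

Lemma Psi_cont ka d : continuity (Psi ka d).
Proof.
  unfold Psi. apply continuity_scal. apply continuity_plus.
  apply continuity_scal. apply continuity_sin. apply derivable_continuous, derivable_id.
Qed.

Lemma Psi_mono ka d a b : 0 < ka -> 0 < d -> 0 <= b <= a -> a <= PI / 2 ->
  2 * ka * d * (sin a - sin b) <= Psi ka d a - Psi ka d b /\ 2 * (a - b) <= Psi ka d a - Psi ka d b.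
Proof.
  intros hk hd hb ha. pose proof PI_RGT_0.
  assert (sin b <= sin a) by (apply sin_incr_1; lra).
  assert (0 <= ka * d * (sin a - sin b)) by (apply Rmult_le_pos; [nra|lra]).
  unfold Psi. split; nra.
Qed.

Lemma sin_le_x x : 0 <= x -> sin x <= x.
Proof. intros h. pose proof (Rabs_sin_le x). rewrite (Rabs_pos_eq x) in H by lra. apply Rabs_le_between in H. lra. Qed.

Lemma sin_nonneg_half x : 0 <= x <= PI / 2 -> 0 <= sin x.
Proof. intros h. apply sin_ge_0; lra. Qed.

Lemma near_int x : exists m : Z, Rabs (x - IZR m * PI) <= PI / 2 /\ Rabs (sin (x - IZR m * PI)) = Rabs (sin x).
Proof.
  pose proof PI_RGT_0.
  destruct (archimed (x / PI + / 2)) as [h1 h2].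
  exists (up (x / PI + / 2) - 1)%Z. rewrite minus_IZR. split.
  - set (u := IZR (up (x / PI + / 2))) in *.
    assert (x = (x / PI) * PI) by (field; lra).
    apply Rabs_le. split.
    + assert (x / PI - / 2 <= u - 1) by lra. 
      assert ((x / PI - /2) * PI <= (u - 1) * PI) by (apply Rmult_le_compat_r; lra). nra.
    + assert (u - 1 >= x / PI - / 2) by lra.
      assert ((u - 1) * PI >= (x / PI - / 2) * PI) by (apply Rmult_ge_compat_r; lra). nra.
  - rewrite sin_minus. set (m := (IZR (up (x / PI + / 2)) - 1)).
    assert (hs : sin (m * PI) = 0) by (apply sin_eq_0_1; exists (up (x / PI + / 2) - 1)%Z; unfold m; rewrite minus_IZR; reflexivity).
    rewrite hs. pose proof (sin2_cos2 (m * PI)). rewrite hs in H0. unfold Rsqr in H0.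
    assert (Rabs (cos (m * PI)) = 1).
    { assert (cos (m * PI) * cos (m * PI) = 1) by lra.
      destruct (Rle_dec 0 (cos (m * PI))). rewrite Rabs_pos_eq by lra. nra. rewrite Rabs_left by lra. nra. }
    rewrite Rmult_0_r, Rminus_0_r, Rabs_mult, H1. ring.
Qed.

Lemma sin_abs_lb y : Rabs y <= PI / 2 -> Rabs y / 3 <= Rabs (sin y).
Proof.
  intros h. destruct (Rle_dec 0 y).
  - rewrite Rabs_pos_eq in * by lra. pose proof (sin_lb3 y ltac:(lra)).
    rewrite Rabs_pos_eq; lra.
  - rewrite Rabs_left in * by lra. pose proof (sin_lb3 (- y) ltac:(lra)). rewrite sin_neg in H.
    rewrite Rabs_left1; lra.
Qed.

Lemma exM r : 0 < r -> exists M : nat, INR M < r <= INR M + 1.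
Proof.
  intros hr. destruct (archimed (- r)) as [h1 h2].
  set (m := (- up (- r))%Z).
  assert (hm1 : IZR m < r) by (unfold m; rewrite opp_IZR; lra).
  assert (hm2 : r <= IZR m + 1) by (unfold m; rewrite opp_IZR; lra).
  assert (hm0 : (0 <= m)%Z).
  { assert (-1 < IZR m) by lra. apply lt_IZR in H. lia. }
  exists (Z.to_nat m). rewrite INR_IZR_INZ, Z2Nat.id by lia. lra.
Qed.

Lemma prodR_nonneg l : (forall x, In x l -> 0 <= x) -> 0 <= prodR l.
Proof. induction l; simpl; intros H. lra. apply Rmult_le_pos; auto. Qed.
Lemma prodR_pos l : (forall x, In x l -> 0 < x) -> 0 < prodR l.
Proof. induction l; simpl; intros H. lra. apply Rmult_lt_0_compat; auto. Qed.
Lemma prodR_le l c : 1 <= c -> (forall x, In x l -> 0 <= x <= c) -> prodR l <= c ^ length l.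
Proof.
  induction l; simpl; intros hc H. lra.
  assert (0 <= prodR l) by (apply prodR_nonneg; intros; apply H; auto).
  destruct (H a (or_introl eq_refl)). apply Rmult_le_compat; auto.
Qed.
Lemma prodR_le_elem l c y : 1 <= c -> (forall x, In x l -> 0 <= x <= c) -> In y l -> prodR l <= y * c ^ length l.
Proof.
  induction l; simpl; intros hc H hy. contradiction.
  assert (0 <= prodR l) by (apply prodR_nonneg; intros; apply H; auto).
  assert (1 <= c ^ length l) by (apply pow_R1_Rle; lra).
  destruct hy as [<-|hy].
  - destruct (H a (or_introl eq_refl)). 
    assert (prodR l <= c ^ length l) by (apply prodR_le; auto).
    apply Rmult_le_compat_l; [lra|]. assert (0 <= (c - 1) * c ^ length l) by (apply Rmult_le_pos; lra). nra.
  - assert (prodR l <= y * c ^ length l) by (apply IHl; auto).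
    destruct (H a (or_introl eq_refl)). destruct (H y (or_intror hy)).
    assert (a * prodR l <= c * (y * c ^ length l)) by (apply Rmult_le_compat; auto).
    nra.
Qed.

Section Zeros.
Variables (k1 k2 ka d : R) (Wf phf Bf ef : R -> R).
Hypotheses (hk1 : 0 < k1) (hk12 : k1 < k2) (hd : 0 < d) (hka : 0 < ka) (hka2 : ka ^ 2 = k2 ^ 2 - k1 ^ 2).
Hypothesis H : forall xi, k1 < Rabs xi < k2 ->
  0 < phf xi < PI / 2 /\ xi ^ 2 = k2 ^ 2 - ka ^ 2 * sin (phf xi) ^ 2 /\
  Bf xi = ka * cos (phf xi) /\ exp (- (2 * ka * d)) <= ef xi /\
  Wf xi = - ef xi * ka * sin (Psi ka d (phf xi)) / sin (phf xi).

Let Pm := Psi ka d (PI / 2).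

Lemma Pm_val : Pm = 2 * ka * d + PI.
Proof. unfold Pm, Psi. rewrite sin_PI2. field. Qed.

Lemma Psi_range p : 0 < p < PI / 2 -> 0 < Psi ka d p < Pm.
Proof.
  intros h. pose proof PI_RGT_0.
  destruct (Psi_mono ka d p 0 hka hd ltac:(lra) ltac:(lra)) as [_ a].
  destruct (Psi_mono ka d (PI / 2) p hka hd ltac:(lra) ltac:(lra)) as [_ b].
  unfold Psi at 2 in a. rewrite sin_0 in a. fold Pm in b. lra.
Qed.

Lemma Psi_inj p q : 0 <= p <= PI / 2 -> 0 <= q <= PI / 2 -> Psi ka d p = Psi ka d q -> p = q.
Proof.
  intros hp hq e. destruct (Rle_dec p q).
  - destruct (Psi_mono ka d q p hka hd ltac:(lra) ltac:(lra)) as [_ a]. lra.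
  - destruct (Psi_mono ka d p q hka hd ltac:(lra) ltac:(lra)) as [_ a]. lra.
Qed.

Lemma sin_inj_half p q : 0 <= p <= PI / 2 -> 0 <= q <= PI / 2 -> sin p = sin q -> p = q.
Proof.
  intros hp hq e. pose proof PI_RGT_0. apply Rle_antisym; apply sin_incr_0; lra.
Qed.

Lemma sin_half_pos p : 0 < p < PI / 2 -> 0 < sin p < 1.
Proof.
  intros h. pose proof PI_RGT_0. split. apply sin_gt_0; lra.
  rewrite <- sin_PI2. apply sin_increasing_1; lra.
Qed.

Lemma cos_half p : 0 < p < PI / 2 -> 0 < cos p <= 1.
Proof.
  intros h. pose proof PI_RGT_0. split. apply cos_gt_0; lra. apply COS_bound.
Qed.

Lemma sq_eq_pos a b : 0 <= a -> 0 <= b -> a ^ 2 = b ^ 2 -> a = b.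
Proof. intros ha hb e. nra. Qed.

Lemma abs_sq xi : Rabs xi ^ 2 = xi ^ 2.
Proof. apply pow2_abs. Qed.

Lemma phm_ex (M : nat) : INR M * PI < Pm -> forall m : nat,
  {p | (1 <= m <= M)%nat -> 0 < p < PI / 2 /\ Psi ka d p = INR m * PI}.
Proof.
  intros hM m. pose proof PI_RGT_0.
  destruct (le_dec 1 m) as [h1|h1]; [destruct (le_dec m M) as [h2|h2]|].
  - assert (hm1 : 1 <= INR m) by (apply (le_INR 1); auto).
    assert (hm2 : INR m <= INR M) by (apply le_INR; auto).
    assert (hy : Rmin (Psi ka d 0) (Psi ka d (PI / 2)) <= INR m * PI <= Rmax (Psi ka d 0) (Psi ka d (PI / 2))).
    { unfold Psi at 1 3. rewrite sin_0. fold Pm. rewrite Pm_val in *.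
      replace (2 * (ka * d * 0 + 0)) with 0 by ring.
      rewrite Rmin_left, Rmax_right by nra. nra. }
    destruct (IVT_gen (Psi ka d) 0 (PI / 2) (INR m * PI) (Psi_cont ka d) hy) as [p [hp ep]].
    rewrite Rmin_left, Rmax_right in hp by lra.
    exists p. intros _. split; auto.
    split.
    + destruct (Req_dec p 0) as [e|e]; [|lra]. subst. unfold Psi in ep. rewrite sin_0 in ep. nra.
    + destruct (Req_dec p (PI / 2)) as [e|e]; [|lra]. subst. fold Pm in ep. nra.
  - exists 0. intros; lia.
  - exists 0. intros; lia.
Qed.

Theorem zeros_main : exists zs cW L, NoDup zs /\
  (forall z, In z zs <-> (k1 < z < k2 /\ Wf z = 0)) /\ 0 < cW /\ 0 < L /\
  (forall xi, k1 < Rabs xi < k2 -> prodR (map (fun z => Rabs (xi ^ 2 - z ^ 2)) zs) <= L) /\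
  (forall xi, k1 < Rabs xi < k2 -> ~ In (Rabs xi) zs ->
     0 < prodR (map (fun z => Rabs (xi ^ 2 - z ^ 2)) zs) /\
     cW * Bf xi * prodR (map (fun z => Rabs (xi ^ 2 - z ^ 2)) zs) <= Rabs (Wf xi)).
Proof.
  pose proof PI_RGT_0 as hPI.
  assert (hPm : 0 < Pm / PI) by (rewrite Pm_val; apply Rdiv_lt_0_compat; nra).
  destruct (exM (Pm / PI) hPm) as [M [hM1 hM2]].
  assert (hM1' : INR M * PI < Pm) by (apply Rmult_lt_reg_r with (/ PI); [apply Rinv_0_lt_compat; lra|];
     rewrite Rmult_assoc, Rinv_r, Rmult_1_r by lra; exact hM1).
  assert (hM2' : Pm <= (INR M + 1) * PI) by (apply Rmult_le_reg_r with (/ PI); [apply Rinv_0_lt_compat; lra|];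
     rewrite Rmult_assoc, Rinv_r, Rmult_1_r by lra; exact hM2).
  set (ph := fun m => proj1_sig (phm_ex M hM1' m)).
  assert (Hph : forall m, (1 <= m <= M)%nat -> 0 < ph m < PI / 2 /\ Psi ka d (ph m) = INR m * PI).
  { intros m hm. unfold ph. destruct (phm_ex M hM1' m) as [p hp]. simpl. auto. }
  set (zm := fun m => sqrt (k2 ^ 2 - ka ^ 2 * sin (ph m) ^ 2)).
  assert (Hz : forall m, (1 <= m <= M)%nat ->
     k1 < zm m < k2 /\ zm m ^ 2 = k2 ^ 2 - ka ^ 2 * sin (ph m) ^ 2 /\ phf (zm m) = ph m).
  { intros m hm. destruct (Hph m hm) as [hp _].
    destruct (sin_half_pos _ hp) as [s1 s2].
    assert (w1 : 0 < ka ^ 2 * (1 - sin (ph m) ^ 2)) by (apply Rmult_lt_0_compat; nra).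
    assert (w2 : 0 < ka ^ 2 * sin (ph m) ^ 2) by (apply Rmult_lt_0_compat; nra).
    assert (v1 : k1 ^ 2 < k2 ^ 2 - ka ^ 2 * sin (ph m) ^ 2) by nra.
    assert (v2 : k2 ^ 2 - ka ^ 2 * sin (ph m) ^ 2 < k2 ^ 2) by nra.
    assert (e2 : zm m ^ 2 = k2 ^ 2 - ka ^ 2 * sin (ph m) ^ 2) by (unfold zm; rewrite pow2_sqrt; nra).
    assert (hz0 : 0 <= zm m) by apply sqrt_pos.
    assert (r : k1 < zm m < k2) by (split; nra).
    split; auto. split; auto.
    destruct (H (zm m)) as [q1 [q2 _]]. rewrite Rabs_pos_eq; lra.
    destruct (sin_half_pos _ q1).
    assert (sin (phf (zm m)) = sin (ph m)) by (apply sq_eq_pos; nra).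
    apply sin_inj_half; lra. }
  set (zs := map zm (seq 1 M)).
  assert (inzs : forall z, In z zs <-> exists m, (1 <= m <= M)%nat /\ z = zm m).
  { intros z. unfold zs. rewrite in_map_iff. split.
    - intros [m [e hm]]. apply in_seq in hm. exists m. split; [lia|auto].
    - intros [m [hm e]]. exists m. split; auto. apply in_seq. lia. }
  set (c := Rmax 1 (ka ^ 2)).
  set (L := c ^ M).
  assert (hc : 1 <= c) by apply Rmax_l.
  assert (hL : 1 <= L) by (apply pow_R1_Rle; lra).
  set (e0 := exp (- (2 * ka * d))).
  assert (he0 : 0 < e0) by apply exp_pos.
  set (cW := e0 * d / (3 * L * (ka + d))).
  assert (hcW : 0 < cW) by (unfold cW; apply Rdiv_lt_0_compat; [nra| apply Rmult_lt_0_compat; lra]).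
  assert (hlen : length zs = M) by (unfold zs; rewrite length_map, length_seq; auto).
  assert (fac : forall xi, k1 < Rabs xi < k2 -> forall x, In x (map (fun z => Rabs (xi ^ 2 - z ^ 2)) zs) -> 0 <= x <= c).
  { intros xi hxi x hx. apply in_map_iff in hx. destruct hx as [z [<- hz]].
    apply inzs in hz. destruct hz as [m [hm ->]]. destruct (Hz m hm) as [[r1 r2] _].
    assert (ka ^ 2 <= c) by apply Rmax_r. rewrite <- abs_sq. split. apply Rabs_pos.
    apply Rabs_le. split; nra. }
  exists zs, cW, L. split; [|split; [|split; [|split; [|split]]]].
  -
    apply NoDup_map_NoDup_ForallPairs; [|apply seq_NoDup].
    intros a b ha hb e. apply in_seq in ha. apply in_seq in hb.
    destruct (Hz a ltac:(lia)) as [_ [ea fa]]. destruct (Hz b ltac:(lia)) as [_ [eb fb]].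
    destruct (Hph a ltac:(lia)) as [pa qa]. destruct (Hph b ltac:(lia)) as [pb qb].
    assert (sin (ph a) ^ 2 = sin (ph b) ^ 2).
    { assert (zm a ^ 2 = zm b ^ 2) by (rewrite e; auto).
      apply Rmult_eq_reg_l with (ka ^ 2); [lra|]. assert (0 < ka ^ 2) by nra. lra. }
    destruct (sin_half_pos _ pa). destruct (sin_half_pos _ pb).
    assert (sin (ph a) = sin (ph b)) by (apply sq_eq_pos; lra).
    assert (ph a = ph b) by (apply sin_inj_half; lra).
    assert (INR a = INR b) by (apply Rmult_eq_reg_r with PI; [|lra]; rewrite <- qa, <- qb; congruence).
    apply INR_eq; auto.
  -
    intros z. rewrite inzs. split.
    + intros [m [hm ->]]. destruct (Hz m hm) as [r [e2 efz]]. split; auto.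
      destruct (H (zm m)) as [_ [_ [_ [_ w]]]]. rewrite Rabs_pos_eq; lra.
      rewrite w, efz. destruct (Hph m hm) as [_ q]. rewrite q.
      rewrite sin_eq_0_1. unfold Rdiv. ring. exists (Z.of_nat m). rewrite <- INR_IZR_INZ. auto.
    + intros [r w]. assert (hz : k1 < Rabs z < k2) by (rewrite Rabs_pos_eq; lra).
      destruct (H z hz) as [q1 [q2 [_ [q4 q5]]]].
      destruct (sin_half_pos _ q1) as [s1 s2].
      assert (hs : sin (Psi ka d (phf z)) = 0).
      { rewrite q5 in w. destruct (Req_dec (sin (Psi ka d (phf z))) 0) as [e|e]; auto. exfalso.
        assert (0 < ef z) by (pose proof (exp_pos (- (2 * ka * d))); lra).
        assert (- ef z * ka * sin (Psi ka d (phf z)) / sin (phf z) <> 0).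
        { unfold Rdiv. intro E.
          apply Rmult_integral in E. destruct E as [E|E].
          - apply Rmult_integral in E. destruct E as [E|E]; [|contradiction].
            apply Rmult_integral in E. destruct E; lra.
          - revert E. apply Rinv_neq_0_compat; lra. }
        auto. }
      apply sin_eq_0_0 in hs. destruct hs as [k hk].
      destruct (Psi_range _ q1) as [g1 g2].
      assert (k1' : 0 < IZR k) by (rewrite hk in g1; nra).
      assert (k2' : IZR k < INR M + 1) by (rewrite hk in g2; nra).
      apply lt_IZR in k1'. rewrite INR_IZR_INZ, <- plus_IZR in k2'. apply lt_IZR in k2'.
      exists (Z.to_nat k). assert (hm : (1 <= Z.to_nat k <= M)%nat) by lia. split; auto.
      destruct (Hph _ hm) as [p1 p2]. rewrite INR_IZR_INZ, Z2Nat.id in p2 by lia.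
      assert (phf z = ph (Z.to_nat k)) by (apply Psi_inj; lra).
      destruct (Hz _ hm) as [_ [e2 _]]. apply sq_eq_pos. lra. unfold zm; apply sqrt_pos.
      rewrite e2, <- H0. rewrite <- q2. reflexivity.
  - exact hcW.
  - lra.
  - intros xi hxi. unfold L. rewrite <- hlen. rewrite <- (length_map (fun z => Rabs (xi ^ 2 - z ^ 2))).
    apply prodR_le; [auto| apply fac; auto].
  - intros xi hxi hnot.
    set (Pi := prodR (map (fun z => Rabs (xi ^ 2 - z ^ 2)) zs)).
    destruct (H xi hxi) as [q1 [q2 [q3 [q4 q5]]]].
    set (p := phf xi) in *. destruct (sin_half_pos p q1) as [s1 s2]. destruct (cos_half p q1) as [c1 c2].
    assert (hPi : 0 < Pi).
    { apply prodR_pos. intros x hx. apply in_map_iff in hx. destruct hx as [z [<- hz]].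
      apply Rabs_pos_lt. intro E. apply hnot.
      assert (hz' := hz). apply inzs in hz'. destruct hz' as [m [hm ->]].
      assert (Rabs xi = zm m). { apply sq_eq_pos. apply Rabs_pos. unfold zm; apply sqrt_pos. rewrite abs_sq. lra. }
      rewrite H0. auto. }
    split; auto.
    assert (hPiL : Pi <= L).
    { unfold Pi, L. rewrite <- hlen. rewrite <- (length_map (fun z => Rabs (xi ^ 2 - z ^ 2))).
      apply prodR_le; [auto| apply fac; auto]. }
    assert (hB : 0 <= Bf xi <= ka) by (rewrite q3; split; nra).
    assert (hef : e0 <= ef xi) by exact q4.
    set (Ps := Psi ka d p) in *.
    assert (hW : e0 * ka * Rabs (sin Ps) <= Rabs (Wf xi)).
    { rewrite q5. unfold Rdiv. rewrite !Rabs_mult, Rabs_Ropp, Rabs_inv.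
      rewrite (Rabs_pos_eq (ef xi)) by lra. rewrite (Rabs_pos_eq ka) by lra.
      rewrite (Rabs_pos_eq (sin p)) by lra.
      assert (1 <= / sin p) by (rewrite <- Rinv_1; apply Rinv_le_contravar; lra).
      assert (0 <= Rabs (sin Ps)) by apply Rabs_pos.
      assert (e0 * ka * Rabs (sin Ps) <= ef xi * ka * Rabs (sin Ps)) by (apply Rmult_le_compat_r; auto; nra).
      assert (0 <= ef xi * ka * Rabs (sin Ps)) by (apply Rmult_le_pos; [nra|auto]).
      nra. }
    assert (hW2 : e0 * ka * Rabs (sin Ps) / sin p <= Rabs (Wf xi)).
    { rewrite q5. unfold Rdiv. rewrite !Rabs_mult, Rabs_Ropp, Rabs_inv.
      rewrite (Rabs_pos_eq (ef xi)) by lra. rewrite (Rabs_pos_eq ka) by lra.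
      rewrite (Rabs_pos_eq (sin p)) by lra.
      apply Rmult_le_compat_r. left; apply Rinv_0_lt_compat; lra.
      apply Rmult_le_compat_r. apply Rabs_pos. nra. }
    destruct (near_int Ps) as [m [hm1 hm2]].
    assert (hsl : Rabs (Ps - IZR m * PI) / 3 <= Rabs (sin Ps)) by (rewrite <- hm2; apply sin_abs_lb; auto).
    assert (cWL : cW * L = e0 * d / (3 * (ka + d))) by (unfold cW; field; lra).
    assert (hdk : d / (ka + d) <= 1) by (apply Rmult_le_reg_r with (ka + d); [lra|]; unfold Rdiv; rewrite Rmult_assoc, Rinv_l by lra; lra).
    assert (hdk2 : ka * (d / (ka + d)) <= d) by (apply Rmult_le_reg_r with (ka + d); [lra|]; unfold Rdiv; rewrite Rmult_assoc, Rmult_assoc, Rinv_l by lra; nra).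
    assert (hcWB : cW * Bf xi * Pi <= cW * Bf xi * L) by (apply Rmult_le_compat_l; [nra|lra]).
    destruct (Z_le_gt_dec m 0) as [hm|hm].
    +
      apply IZR_le in hm.
      destruct (Psi_mono ka d p 0 hka hd ltac:(lra) ltac:(lra)) as [_ g]. unfold Psi at 2 in g. rewrite sin_0 in g.
      fold Ps in g. pose proof (sin_le_x p ltac:(lra)).
      assert (Rabs (Ps - IZR m * PI) >= 2 * sin p) by (rewrite Rabs_pos_eq; nra).
      assert (2 * sin p / 3 <= Rabs (sin Ps)) by lra.
      assert (2 / 3 * e0 * ka <= Rabs (Wf xi)).
      { eapply Rle_trans; [|exact hW2]. apply Rmult_le_reg_r with (sin p); auto.
        replace (e0 * ka * Rabs (sin Ps) / sin p * sin p) with (e0 * ka * Rabs (sin Ps)) by (field; lra).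
        assert (0 < e0 * ka) by nra. nra. }
      assert (cW * Bf xi * L <= 2 / 3 * e0 * ka).
      { replace (cW * Bf xi * L) with (Bf xi * (cW * L)) by ring. rewrite cWL.
        replace (e0 * d / (3 * (ka + d))) with (e0 / 3 * (d / (ka + d))) by (field; lra).
        assert (0 <= e0 / 3) by lra. assert (0 <= d / (ka + d)) by (apply Rdiv_le_0_compat; lra).
        assert (Bf xi * (e0 / 3 * (d / (ka + d))) <= ka * (e0 / 3 * 1)) by (apply Rmult_le_compat; try nra).
        assert (0 <= e0 * ka) by nra. lra. }
      lra.
    + destruct (Z_le_gt_dec m (Z.of_nat M)) as [hm'|hm'].
      *
        set (m' := Z.to_nat m).
        assert (hmm : (1 <= m' <= M)%nat) by (unfold m'; lia).
        destruct (Hph m' hmm) as [p1 p2]. destruct (Hz m' hmm) as [_ [e2 _]].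
        rewrite INR_IZR_INZ in p2. unfold m' in p2. rewrite Z2Nat.id in p2 by lia. fold m' in p2.
        destruct (sin_half_pos _ p1) as [t1 t2].
        set (sm := sin (ph m')) in *.
        assert (hd1 : 2 * ka * d * Rabs (sin p - sm) <= Rabs (Ps - IZR m * PI)).
        { rewrite <- p2. destruct (Rle_dec (ph m') p).
          - destruct (Psi_mono ka d p (ph m') hka hd ltac:(lra) ltac:(lra)) as [g _].
            assert (sm <= sin p) by (apply sin_incr_1; lra). fold Ps in g.
            assert (0 <= 2 * ka * d * (sin p - sm)) by (apply Rmult_le_pos; [nra|lra]).
            rewrite (Rabs_pos_eq (sin p - sm)) by lra. fold sm in g. rewrite (Rabs_pos_eq (Ps - _)) by lra. lra.
          - destruct (Psi_mono ka d (ph m') p hka hd ltac:(lra) ltac:(lra)) as [g _].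
            assert (sin p <= sm) by (apply sin_incr_1; lra). fold Ps in g.
            assert (0 <= 2 * ka * d * (sm - sin p)) by (apply Rmult_le_pos; [nra|lra]).
            fold sm in g. rewrite (Rabs_left1 (sin p - sm)) by lra. rewrite (Rabs_left1 (Ps - _)) by lra. lra. }
        assert (hd2 : Rabs (xi ^ 2 - zm m' ^ 2) <= 2 * ka ^ 2 * Rabs (sin p - sm)).
        { rewrite q2, e2. replace (k2 ^ 2 - ka ^ 2 * sin p ^ 2 - (k2 ^ 2 - ka ^ 2 * sm ^ 2))
            with (ka ^ 2 * ((sm + sin p) * (sm - sin p))) by ring.
          rewrite !Rabs_mult, (Rabs_pos_eq (ka ^ 2)) by nra. rewrite (Rabs_pos_eq (sm + sin p)) by lra.
          rewrite <- Rabs_Ropp. replace (- (sm - sin p)) with (sin p - sm) by ring.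
          assert (0 <= Rabs (sin p - sm)) by apply Rabs_pos. assert (0 < ka ^ 2) by nra.
          assert ((sm + sin p) * Rabs (sin p - sm) <= 2 * Rabs (sin p - sm)) by nra. nra. }
        set (D := Rabs (xi ^ 2 - zm m' ^ 2)) in *.
        assert (hPiD : Pi <= D * L).
        { unfold Pi, L. rewrite <- hlen. rewrite <- (length_map (fun z => Rabs (xi ^ 2 - z ^ 2))).
          apply prodR_le_elem; [auto| apply fac; auto|]. apply in_map_iff. exists (zm m'). split; auto.
          apply inzs. exists m'; auto. }
        assert (hWD : e0 * d * D / 3 <= Rabs (Wf xi)).
        { eapply Rle_trans; [|exact hW].
          assert (d * D <= ka * Rabs (Ps - IZR m * PI)).
          { assert (d * D <= d * (2 * ka ^ 2 * Rabs (sin p - sm))) by (apply Rmult_le_compat_l; lra).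
            nra. }
          assert (e0 * (d * D) <= e0 * (ka * Rabs (Ps - IZR m * PI))) by (apply Rmult_le_compat_l; lra).
          assert (e0 * ka * (Rabs (Ps - IZR m * PI) / 3) <= e0 * ka * Rabs (sin Ps)) by (apply Rmult_le_compat_l; [nra|lra]).
          lra. }
        assert (cW * Bf xi * Pi <= e0 * d * D / 3).
        { assert (cW * Bf xi * Pi <= cW * Bf xi * (D * L)) by (apply Rmult_le_compat_l; [nra|lra]).
          assert (X1 : cW * Bf xi * (D * L) = D * Bf xi * (e0 / 3 * (d / (ka + d)))) by (unfold cW; field; lra).
          rewrite X1 in H0.
          assert (0 <= D) by apply Rabs_pos.
          assert (Bf xi * (d / (ka + d)) <= d).
          { assert (Bf xi * (d / (ka + d)) <= ka * (d / (ka + d))) by (apply Rmult_le_compat_r; [apply Rdiv_le_0_compat; lra|lra]). lra. }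
          assert (D * Bf xi * (e0 / 3 * (d / (ka + d))) = D * (e0 / 3) * (Bf xi * (d / (ka + d)))) by ring.
          assert (D * (e0 / 3) * (Bf xi * (d / (ka + d))) <= D * (e0 / 3) * d) by (apply Rmult_le_compat_l; nra).
          nra. }
        lra.
      *
        assert (hmM : INR M + 1 <= IZR m).
        { rewrite INR_IZR_INZ, <- plus_IZR. apply IZR_le. lia. }
        destruct (Psi_mono ka d (PI / 2) p hka hd ltac:(lra) ltac:(lra)) as [_ g]. fold Pm in g. fold Ps in g.
        assert (sin (PI / 2 - p) <= PI / 2 - p) by (apply sin_le_x; lra).
        rewrite sin_shift in H0.
        assert (IZR m * PI >= Pm) by nra.
        assert (Rabs (Ps - IZR m * PI) >= 2 * cos p) by (rewrite Rabs_left1; lra).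
        assert (2 / 3 * e0 * Bf xi <= Rabs (Wf xi)).
        { eapply Rle_trans; [|exact hW]. rewrite q3.
          assert (2 * cos p / 3 <= Rabs (sin Ps)) by lra.
          assert (0 < e0 * ka) by nra. nra. }
        assert (cW * Bf xi * L <= 2 / 3 * e0 * Bf xi).
        { replace (cW * Bf xi * L) with (Bf xi * (cW * L)) by ring. rewrite cWL.
          replace (e0 * d / (3 * (ka + d))) with (e0 / 3 * (d / (ka + d))) by (field; lra).
          assert (0 <= e0 / 3) by lra. assert (0 <= d / (ka + d)) by (apply Rdiv_le_0_compat; lra).
          assert (e0 / 3 * (d / (ka + d)) <= e0 / 3 * 1) by (apply Rmult_le_compat_l; lra).
          assert (Bf xi * (e0 / 3 * (d / (ka + d))) <= Bf xi * (e0 / 3 * 1)) by (apply Rmult_le_compat_l; lra).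
          assert (0 <= e0 * Bf xi) by nra. lra. }
        lra.
Qed.

End Zeros.

Definition E1 (ki kr x : R) := exp (- (ki * x)) * cos (kr * x).
Definition E2 (ki kr x : R) := exp (- (ki * x)) * sin (kr * x).
Definition D1 ki kr x := - ki * E1 ki kr x - kr * E2 ki kr x.
Definition D2 ki kr x := - ki * E2 ki kr x + kr * E1 ki kr x.

Lemma E1_der ki kr x : is_derive (E1 ki kr) x (D1 ki kr x).
Proof. unfold D1, E1, E2. auto_derive. exact I. ring. Qed.
Lemma E2_der ki kr x : is_derive (E2 ki kr) x (D2 ki kr x).
Proof. unfold D2, E1, E2. auto_derive. exact I. ring. Qed.
Lemma E1n_der ki kr x : is_derive (fun t => E1 ki kr (- t)) x (- D1 ki kr (- x)).
Proof. unfold D1, E1, E2. auto_derive. exact I. ring. Qed.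
Lemma E2n_der ki kr x : is_derive (fun t => E2 ki kr (- t)) x (- D2 ki kr (- x)).
Proof. unfold D2, E1, E2. auto_derive. exact I. ring. Qed.

Section Sol.
Variables (k1 k2 d : R) (hd : 0 < d) (xi : R) (up dup um dum : R -> C).
Hypothesis Hup : is_sol k1 k2 d xi up dup /\
           (forall x, d < x -> up x = expIC (Cmult (RtoC x) (kappa k1 xi))).
Hypothesis Hum : is_sol k1 k2 d xi um dum /\
           (forall x, x < - d -> um x = expIC (Cmult (RtoC (- x)) (kappa k1 xi))).

Let kr := fst (kappa k1 xi).
Let ki := snd (kappa k1 xi).
Definition fp t := fst (up t).
Definition dfp t := fst (dup t).
Definition gp t := snd (up t).
Definition dgp t := snd (dup t).
Definition fm t := fst (um t).
Definition dfm t := fst (dum t).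
Definition gm t := snd (um t).
Definition dgm t := snd (dum t).

Lemma Rfp : rsol k1 k2 d xi fp dfp. Proof. apply sol_fst, Hup. Qed.
Lemma Rgp : rsol k1 k2 d xi gp dgp. Proof. apply sol_snd, Hup. Qed.
Lemma Rfm : rsol k1 k2 d xi fm dfm. Proof. apply sol_fst, Hum. Qed.
Lemma Rgm : rsol k1 k2 d xi gm dgm. Proof. apply sol_snd, Hum. Qed.

Lemma up_right x : d < x -> fp x = E1 ki kr x /\ gp x = E2 ki kr x.
Proof.
  intros h. unfold fp, gp. rewrite (proj2 Hup x h). unfold ki, kr.
  destruct (kappa k1 xi) as [a b]. unfold expIC, Cmult, RtoC, Re, Im, E1, E2. simpl.
  replace (x * b + 0 * a) with (b * x) by ring. replace (x * a - 0 * b) with (a * x) by ring.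
  split; reflexivity.
Qed.
Lemma um_left x : x < - d -> fm x = E1 ki kr (- x) /\ gm x = E2 ki kr (- x).
Proof.
  intros h. unfold fm, gm. rewrite (proj2 Hum x h). unfold ki, kr.
  destruct (kappa k1 xi) as [a b]. unfold expIC, Cmult, RtoC, Re, Im, E1, E2. simpl.
  replace (- x * b + 0 * a) with (b * - x) by ring. replace (- x * a - 0 * b) with (a * - x) by ring.
  split; reflexivity.
Qed.

Lemma cE1 x : continuous (E1 ki kr) x. Proof. eapply der_cont, E1_der. Qed.
Lemma cE2 x : continuous (E2 ki kr) x. Proof. eapply der_cont, E2_der. Qed.
Lemma cD1 x : continuous (D1 ki kr) x.
Proof. unfold D1. apply cont_minus; apply (cont_mult (fun _ => _)); try apply cont_const; [apply cE1|apply cE2]. Qed.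
Lemma cD2 x : continuous (D2 ki kr) x.
Proof. unfold D2. apply cont_plus; apply (cont_mult (fun _ => _)); try apply cont_const; [apply cE2|apply cE1]. Qed.

Lemma fp_d : fp d = E1 ki kr d.
Proof. apply right_val. apply (rs_cont _ _ _ _ _ _ Rfp). apply cE1. intros; apply up_right; auto. Qed.
Lemma gp_d : gp d = E2 ki kr d.
Proof. apply right_val. apply (rs_cont _ _ _ _ _ _ Rgp). apply cE2. intros; apply up_right; auto. Qed.
Lemma dfp_d : dfp d = D1 ki kr d.
Proof.
  destruct Rfp as [H1 [H2 _]]. apply right_val; auto. apply cD1.
  apply (der_agree fp dfp (E1 ki kr) (D1 ki kr) d H1 (E1_der ki kr)).
  intros; apply up_right; auto.
Qed.
Lemma dgp_d : dgp d = D2 ki kr d.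
Proof.
  destruct Rgp as [H1 [H2 _]]. apply right_val; auto. apply cD2.
  apply (der_agree gp dgp (E2 ki kr) (D2 ki kr) d H1 (E2_der ki kr)).
  intros; apply up_right; auto.
Qed.

Lemma cE1n x : continuous (fun t => E1 ki kr (- t)) x. Proof. eapply der_cont, E1n_der. Qed.
Lemma cE2n x : continuous (fun t => E2 ki kr (- t)) x. Proof. eapply der_cont, E2n_der. Qed.

Lemma fm_d : fm (- d) = E1 ki kr d.
Proof.
  rewrite <- (Ropp_involutive d) at 2.
  apply (left_val fm (fun t => E1 ki kr (- t)) (- d)). apply (rs_cont _ _ _ _ _ _ Rfm). apply cE1n. intros; apply um_left; auto.
Qed.
Lemma gm_d : gm (- d) = E2 ki kr d.
Proof.
  rewrite <- (Ropp_involutive d) at 2.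
  apply (left_val gm (fun t => E2 ki kr (- t)) (- d)). apply (rs_cont _ _ _ _ _ _ Rgm). apply cE2n. intros; apply um_left; auto.
Qed.
Lemma dfm_d : dfm (- d) = - D1 ki kr d.
Proof.
  destruct Rfm as [H1 [H2 _]].
  rewrite <- (Ropp_involutive d) at 2.
  apply (left_val dfm (fun t => - D1 ki kr (- t)) (- d)); auto.
  { apply (continuous_opp (U:=R_UniformSpace) (K:=R_AbsRing) (V:=R_NormedModule) (fun t => D1 ki kr (- t))).
    apply (continuous_comp (fun t => - t) (D1 ki kr)). apply (der_cont (fun t => - t) _ (-1)).
    auto_derive; auto; ring. apply cD1. }
  apply (der_agree_l fm dfm (fun t => E1 ki kr (- t)) (fun t => - D1 ki kr (- t)) (- d) H1 (E1n_der ki kr)).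
  intros; apply um_left; auto.
Qed.
Lemma dgm_d : dgm (- d) = - D2 ki kr d.
Proof.
  destruct Rgm as [H1 [H2 _]].
  rewrite <- (Ropp_involutive d) at 2.
  apply (left_val dgm (fun t => - D2 ki kr (- t)) (- d)); auto.
  { apply (continuous_opp (U:=R_UniformSpace) (K:=R_AbsRing) (V:=R_NormedModule) (fun t => D2 ki kr (- t))).
    apply (continuous_comp (fun t => - t) (D2 ki kr)). apply (der_cont (fun t => - t) _ (-1)).
    auto_derive; auto; ring. apply cD2. }
  apply (der_agree_l gm dgm (fun t => E2 ki kr (- t)) (fun t => - D2 ki kr (- t)) (- d) H1 (E2n_der ki kr)).
  intros; apply um_left; auto.
Qed.

Lemma fm_refl t : fm t = fp (- t).
Proof.
  apply (rs_refl k1 k2 d xi hd fp dfp fm dfm Rfp Rfm).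
  - rewrite fm_d, fp_d; auto.
  - rewrite dfm_d, dfp_d; auto.
  - intros s hs. destruct (um_left s hs) as [-> _]. destruct (up_right (- s)) as [-> _]; lra.
Qed.
Lemma gm_refl t : gm t = gp (- t).
Proof.
  apply (rs_refl k1 k2 d xi hd gp dgp gm dgm Rgp Rgm).
  - rewrite gm_d, gp_d; auto.
  - rewrite dgm_d, dgp_d; auto.
  - intros s hs. destruct (um_left s hs) as [_ ->]. destruct (up_right (- s)) as [_ ->]; lra.
Qed.

Lemma at0_f : fm 0 = fp 0 /\ dfm 0 = - dfp 0.
Proof.
  destruct (rs_in k1 k2 d xi fp dfp Rfp d 0) as [a1 a2]; try lra.
  destruct (rs_in k1 k2 d xi fm dfm Rfm (-d) 0) as [b1 b2]; try lra.
  rewrite a1, a2, b1, b2, fm_d, dfm_d, fp_d, dfp_d.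
  replace (0 - d) with (- (0 - - d)) by ring. rewrite Cf_even, Sf_odd. split; ring.
Qed.
Lemma at0_g : gm 0 = gp 0 /\ dgm 0 = - dgp 0.
Proof.
  destruct (rs_in k1 k2 d xi gp dgp Rgp d 0) as [a1 a2]; try lra.
  destruct (rs_in k1 k2 d xi gm dgm Rgm (-d) 0) as [b1 b2]; try lra.
  rewrite a1, a2, b1, b2, gm_d, dgm_d, gp_d, dgp_d.
  replace (0 - d) with (- (0 - - d)) by ring. rewrite Cf_even, Sf_odd. split; ring.
Qed.

Lemma W_eq : wronsk um dum up dup =
  (2 * (fp 0 * dfp 0 - gp 0 * dgp 0), 2 * (fp 0 * dgp 0 + gp 0 * dfp 0)).
Proof.
  destruct at0_f as [a1 a2]. destruct at0_g as [b1 b2].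
  unfold fm, dfm, gm, dgm, fp, dfp, gp, dgp in *.
  unfold wronsk, Cminus, Cplus, Copp, Cmult. simpl.
  destruct (um 0) as [u1 u2]; destruct (dum 0) as [v1 v2]; destruct (up 0) as [w1 w2];
  destruct (dup 0) as [z1 z2]. simpl in *. subst. f_equal; ring.
Qed.


Lemma um_up t : um t = up (- t).
Proof.
  pose proof (fm_refl t) as a. pose proof (gm_refl t) as b. unfold fm, fp, gm, gp in *.
  destruct (um t), (up (- t)); simpl in *; subst; auto.
Qed.

Lemma res_mod_gt x y : wronsk um dum up dup <> RtoC 0 -> y < x ->
  Cmod (resolvent um up (wronsk um dum up dup) x y) =
  Cmod (up x) * Cmod (up (- y)) / Cmod (wronsk um dum up dup).
Proof.
  intros hW h. unfold resolvent. destruct Rlt_dec; [|lra].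
  rewrite !Cmod_mult, Cmod_inv by exact hW. rewrite um_up. unfold Rdiv. ring.
Qed.
Lemma res_mod_lt x y : wronsk um dum up dup <> RtoC 0 -> x < y ->
  Cmod (resolvent um up (wronsk um dum up dup) x y) =
  Cmod (up y) * Cmod (up (- x)) / Cmod (wronsk um dum up dup).
Proof.
  intros hW h. unfold resolvent. destruct Rlt_dec; [lra|].
  rewrite !Cmod_mult, Cmod_inv by exact hW. rewrite um_up. unfold Rdiv. ring.
Qed.

Lemma Cmod_up t : Cmod (up t) = sqrt (fp t ^ 2 + gp t ^ 2).
Proof. unfold fp, gp, Cmod. destruct (up t); simpl. reflexivity. Qed.

Section AB.
Hypothesis hk : k1 < Rabs xi.
Let B := sqrt (xi ^ 2 - k1 ^ 2).
Let lam := k2 ^ 2 - xi ^ 2.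

Hypothesis hk1 : 0 < k1.
Lemma ab_sq : k1 ^ 2 < xi ^ 2.
Proof. rewrite <- (pow2_abs xi). nra. Qed.
Lemma ab_B : 0 < B.
Proof. unfold B. apply sqrt_lt_R0. pose proof ab_sq. lra. Qed.

Lemma ab_kappa : kappa k1 xi = (0, B).
Proof. unfold kappa. destruct Rlt_dec; [lra|reflexivity]. Qed.
Lemma ab_kr : kr = 0. Proof. unfold kr. rewrite ab_kappa. reflexivity. Qed.
Lemma ab_ki : ki = B. Proof. unfold ki. rewrite ab_kappa. reflexivity. Qed.

Lemma ab_E1 t : E1 ki kr t = exp (- (B * t)).
Proof. unfold E1. rewrite ab_kr, ab_ki. rewrite Rmult_0_l, cos_0. ring. Qed.
Lemma ab_E2 t : E2 ki kr t = 0.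
Proof. unfold E2. rewrite ab_kr. rewrite Rmult_0_l, sin_0. ring. Qed.

Lemma ab_gp t : gp t = 0.
Proof.
  apply (rs_zero k1 k2 d xi hd gp dgp Rgp).
  - rewrite gp_d. apply ab_E2.
  - rewrite dgp_d. unfold D2. rewrite ab_E2, ab_kr. ring.
Qed.
Lemma ab_dgp0 : dgp 0 = 0.
Proof.
  destruct (rs_in k1 k2 d xi gp dgp Rgp d 0) as [_ e]; try lra.
  rewrite e, gp_d, dgp_d. unfold D2. rewrite ab_E2, ab_kr. ring.
Qed.

Lemma ab_right t : d <= t -> fp t = exp (- (B * t)).
Proof.
  intros h. destruct (Rle_lt_or_eq_dec d t h) as [h'|<-].
  - rewrite (proj1 (up_right t h')). apply ab_E1.
  - rewrite fp_d. apply ab_E1.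
Qed.

Lemma ab_in t : - d <= t <= d ->
  fp t = exp (- (B * d)) * (Cf lam (d - t) + B * Sf lam (d - t)) /\
  dfp t = - exp (- (B * d)) * (B * Cf lam (d - t) - lam * Sf lam (d - t)).
Proof.
  intros h. destruct (rs_in k1 k2 d xi fp dfp Rfp d t) as [e1 e2]; try lra.
  rewrite e1, e2, fp_d, dfp_d. unfold D1. rewrite ab_E1, ab_E2, ab_ki, ab_kr.
  replace (t - d) with (- (d - t)) by ring. rewrite Cf_even, Sf_odd. fold lam. split; ring.
Qed.

Definition Wab := - 2 * exp (- (B * d)) ^ 2 * (Cf lam d + B * Sf lam d) * (B * Cf lam d - lam * Sf lam d).

Lemma ab_W : wronsk um dum up dup = (Wab, 0).
Proof.
  rewrite W_eq. rewrite ab_dgp0, (ab_gp 0).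
  destruct (ab_in 0) as [e1 e2]; try lra. rewrite e1, e2. unfold Wab.
  rewrite Rminus_0_r. f_equal; ring.
Qed.

Lemma ab_Wd : Wab = exp (- (B * d)) * (dfp (- d) - B * fp (- d)).
Proof.
  pose proof (wr_const k1 k2 d xi hd fm dfm fp dfp Rfm Rfp (- d)) as e.
  destruct at0_f as [a1 a2]. rewrite a1, a2 in e. rewrite fm_d, dfm_d in e.
  unfold D1 in e. rewrite ab_E1, ab_E2, ab_ki in e.
  destruct (ab_in 0) as [e1 e2]; try lra. rewrite e1, e2 in e. unfold Wab.
  rewrite Rminus_0_r in e. lra.
Qed.

Lemma ab_left t : t <= - d ->
  fp t = fp (- d) * exp (- (B * (- d - t)))
         - Wab * exp (B * d) * ((exp (B * (- d - t)) - exp (- (B * (- d - t)))) / 2) / B.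
Proof.
  intros h. destruct (rs_left k1 k2 d xi hd fp dfp Rfp t) as [e _]; try lra.
  rewrite e. assert (hB := ab_B).
  assert (hl : k1 ^ 2 - xi ^ 2 < 0) by (pose proof ab_sq; lra).
  assert (sq : sqrt (- (k1 ^ 2 - xi ^ 2)) = B) by (unfold B; f_equal; ring).
  unfold Cf, Sf. destruct (Rlt_dec 0 (k1 ^ 2 - xi ^ 2)); [lra|].
  destruct (Rlt_dec (k1 ^ 2 - xi ^ 2) 0); [|lra]. rewrite sq.
  assert (hd' : dfp (- d) = Wab * exp (B * d) + B * fp (- d)).
  { assert (ee : exp (- (B * d)) * exp (B * d) = 1).
    { rewrite <- exp_plus. replace (- (B * d) + B * d) with 0 by ring. apply exp_0. }
    rewrite ab_Wd. transitivity (exp (- (B * d)) * exp (B * d) * (dfp (- d) - B * fp (- d)) + B * fp (- d));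
    [rewrite ee; ring | ring]. }
  rewrite hd'. replace (- (B * (- d - t))) with (B * (t + d)) by ring.
  replace (B * (- d - t)) with (- (B * (t + d))) by ring.
  field. lra.
Qed.

Section RA.
Hypothesis hk12 : k1 < k2.
Hypothesis hk2 : k2 < Rabs xi.
Let A := sqrt (xi ^ 2 - k2 ^ 2).
Let ka := sqrt (k2 ^ 2 - k1 ^ 2).
Let Ga := 2 + 4 * ka * d.
Let GG := fun s => Cf lam s + B * Sf lam s.

Lemma ra_sq : k2 ^ 2 < xi ^ 2.
Proof. rewrite <- (pow2_abs xi). nra. Qed.
Lemma ra_A : 0 < A. Proof. unfold A. apply sqrt_lt_R0. pose proof ra_sq. lra. Qed.
Lemma ra_ka : 0 < ka. Proof. unfold ka. apply sqrt_lt_R0. nra. Qed.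
Lemma ra_BA : B ^ 2 = A ^ 2 + ka ^ 2.
Proof.
  unfold B, A, ka. pose proof ra_sq. pose proof ab_sq.
  rewrite !pow2_sqrt by nra. ring.
Qed.
Lemma ra_lam : lam < 0. Proof. unfold lam. pose proof ra_sq. lra. Qed.
Lemma ra_sqlam : sqrt (- lam) = A. Proof. unfold A, lam. f_equal. ring. Qed.

Lemma ra_Cf s : Cf lam s = (exp (A * s) + exp (- (A * s))) / 2.
Proof. unfold Cf. pose proof ra_lam. destruct Rlt_dec; [lra|]. destruct Rlt_dec; [|lra]. rewrite ra_sqlam. auto. Qed.
Lemma ra_Sf s : Sf lam s = (exp (A * s) - exp (- (A * s))) / (2 * A).
Proof. unfold Sf. pose proof ra_lam. destruct Rlt_dec; [lra|]. destruct Rlt_dec; [|lra]. rewrite ra_sqlam. auto. Qed.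

Lemma ra_G s : 0 <= s <= 2 * d -> Rabs (GG s) <= Ga * exp (A * s).
Proof.
  intros h. unfold GG. rewrite ra_Cf, ra_Sf.
  destruct (a_G_bound A B ka d ra_A ra_ka ab_B ra_BA s h) as [g1 g2].
  rewrite Rabs_pos_eq by exact g1. exact g2.
Qed.

Lemma ra_W : exp (- (B * d)) ^ 2 * B * exp (A * d) ^ 2 <= Rabs Wab.
Proof.
  unfold Wab. fold lam. rewrite ra_Cf, ra_Sf.
  pose proof (a_Gd_lower A B ka d ra_A ra_ka hd ab_B ra_BA) as g1.
  pose proof (a_Gp_lower A B d ra_A hd ab_B) as g2.
  assert (e : B * ((exp (A * d) + exp (- (A * d))) / 2) - lam * ((exp (A * d) - exp (- (A * d))) / (2 * A))
     = B * ((exp (A * d) + exp (- (A * d))) / 2) + A * ((exp (A * d) - exp (- (A * d))) / 2)).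
  { assert (lam = - (A * A)) by (rewrite <- ra_sqlam; rewrite sqrt_sqrt; [ring| pose proof ra_lam; lra]).
    rewrite H. field. pose proof ra_A; lra. }
  rewrite e. clear e.
  set (g := (exp (A * d) + exp (- (A * d))) / 2 + B * ((exp (A * d) - exp (- (A * d))) / (2 * A))) in *.
  set (g' := B * ((exp (A * d) + exp (- (A * d))) / 2) + A * ((exp (A * d) - exp (- (A * d))) / 2)) in *.
  set (eb := exp (- (B * d))). set (ea := exp (A * d)) in *.
  assert (0 < eb) by apply exp_pos. assert (0 < ea) by apply exp_pos. pose proof ab_B.
  rewrite Rabs_mult, Rabs_mult, Rabs_mult, Rabs_pos_eq with (x := g) by lra.
  rewrite Rabs_pos_eq with (x := g') by nra.
  rewrite (Rabs_pos_eq (eb ^ 2)) by nra. replace (Rabs (-2)) with 2 by (unfold Rabs; destruct Rcase_abs; lra).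
  assert (0 <= eb ^ 2) by nra.
  assert (h1 : ea * (B * ea / 2) <= g * g') by (apply Rmult_le_compat; nra).
  assert (0 <= eb ^ 2 * (g * g' - ea * (B * ea / 2))) by (apply Rmult_le_pos; lra).
  nra.
Qed.

Definition CA := (k2 + 1) / ka * (Ga ^ 2 + Ga + exp (2 * ka * d) + 1).

Lemma ra_invB : / B <= (k2 + 1) / ka / (1 + Rabs xi).
Proof.
  pose proof ab_B. pose proof ra_ka. pose proof (Rabs_pos xi).
  assert (hx : Rabs xi <= k2 / ka * B).
  { assert (Rabs xi ^ 2 * ka ^ 2 <= k2 ^ 2 * B ^ 2).
    { unfold B, ka. rewrite !pow2_sqrt. rewrite pow2_abs. pose proof ra_sq. nra.
      pose proof ab_sq; lra. nra. }
    assert (Rabs xi * ka <= k2 * B).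
    { apply Rsqr_incr_0_var. unfold Rsqr. nra. nra. }
    replace (k2 / ka * B) with ((k2 * B) / ka) by (field; lra).
    apply Rmult_le_reg_r with ka; auto. replace (k2 * B / ka * ka) with (k2 * B) by (field; lra). lra. }
  assert (1 + Rabs xi <= (k2 + 1) / ka * B).
  { assert (1 <= B / ka * 1 + 0) .
    { assert (ka <= B) by (pose proof ra_BA; pose proof ra_A; nra).
      replace (B / ka * 1 + 0) with (B / ka) by ring. apply Rmult_le_reg_r with ka; auto.
      unfold Rdiv. rewrite Rmult_assoc, Rinv_l by lra. lra. }
    assert (k2 <= Rabs xi) by lra.
    assert (hkk : 1 <= Rabs xi / k2) by (apply Rmult_le_reg_r with k2; [lra|]; unfold Rdiv; rewrite Rmult_assoc, Rinv_l by lra; lra).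
    replace ((k2 + 1) / ka * B) with (k2 / ka * B + B / ka) by (field; lra).
    assert (1 <= B / ka) by lra.
    lra. }
  apply Rmult_le_reg_r with (1 + Rabs xi); [lra|].
  replace ((k2 + 1) / ka / (1 + Rabs xi) * (1 + Rabs xi)) with ((k2+1)/ka) by (field; lra).
  apply Rmult_le_reg_l with B; auto.
  replace (B * (/ B * (1 + Rabs xi))) with (1 + Rabs xi) by (field; lra). lra.
Qed.

Lemma ra_AB : A <= B. Proof. pose proof ra_BA. pose proof ra_A. pose proof ab_B. nra. Qed.
Lemma ra_Ga : 0 <= Ga. Proof. pose proof ra_ka. unfold Ga. nra. Qed.
Lemma ra_X : / exp (- (2 * (B - A) * d)) <= exp (2 * ka * d).
Proof.
  rewrite <- exp_Ropp. apply exp_mono.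
  pose proof ra_BA. pose proof ra_A. pose proof ab_B. pose proof ra_ka.
  assert (B - A <= ka).
  { assert (ka <= B) by nra. assert ((B - A) * (B + A) = ka * ka) by nra. nra. }
  nra.
Qed.
Lemma ra_WX : exp (- (2 * (B - A) * d)) * B <= Rabs Wab.
Proof.
  eapply Rle_trans; [|apply ra_W].
  replace (exp (- (B * d)) ^ 2 * B * exp (A * d) ^ 2) with
    ((exp (- (B * d)) * exp (- (B * d)) * exp (A * d) * exp (A * d)) * B) by ring.
  rewrite <- !exp_plus. right. f_equal. f_equal. ring.
Qed.

Lemma ra_final lo hi : lo < hi ->
  (outside_region d lo hi ->
     Rabs (fp hi * fp (- lo)) / Rabs Wab <= CA / (1 + Rabs xi) * exp (- B * Rabs (hi - lo))) /\
  Rabs (fp hi * fp (- lo)) / Rabs Wab <= CA / (1 + Rabs xi) * exp (- A * Rabs (hi - lo)).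
Proof.
  intros hlt. rewrite (Rabs_pos_eq (hi - lo)) by lra.
  assert (hT : 0 < hi + - lo) by lra.
  pose proof ra_AB as hAB. pose proof ra_A as hA. pose proof ab_B as hB.
  assert (HR : forall t, d <= t -> fp t = exp (- (B * t))) by exact ab_right.
  assert (HI : forall t, - d <= t <= d -> fp t = exp (- (B * d)) * GG (d - t)) by (intros; apply ab_in; auto).
  assert (HL := ab_left).
  assert (HG := ra_G).
  pose proof (exp_pos (- (B * (hi + - lo)))). pose proof (exp_pos (- (A * (hi + - lo)))).
  assert (eAB : exp (- (B * (hi + - lo))) <= exp (- (A * (hi + - lo)))) by (apply exp_mono; nra).
  assert (hX : 0 < exp (- (2 * (B - A) * d))) by apply exp_pos.
  assert (hinv : forall K e, 0 <= K -> 0 <= e -> K * e / B <= ((k2 + 1) / ka * K) / (1 + Rabs xi) * e).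
  { intros K e hK he. pose proof ra_invB. pose proof (Rabs_pos xi). pose proof ra_ka.
    replace (K * e / B) with (K * e * / B) by (unfold Rdiv; ring).
    replace ((k2 + 1) / ka * K / (1 + Rabs xi) * e) with (K * e * ((k2 + 1) / ka / (1 + Rabs xi))) by (field; lra).
    apply Rmult_le_compat_l; nra. }
  pose proof ra_Ga as hGa. pose proof (exp_pos (2 * ka * d)).
  split.
  - intros hout.
    assert (P := pair_out fp GG A B d Wab Ga hd hA hAB hGa HR HI HL HG hi (- lo) hT).
    assert (hc : (d < hi /\ d < - lo) \/ hi < - d \/ - lo < - d).
    { unfold outside_region in hout. lra. }
    specialize (P hc).
    assert (Q := comb (Rabs (fp hi * fp (- lo))) Wab (exp (- (2 * (B - A) * d))) B (exp (- (B * (hi + - lo)))) (exp (- (B * (hi + - lo)))) Ga (exp (2 * ka * d)) hB hX ra_WX ra_X hGa (conj (Rlt_le _ _ H) (Rle_refl _))).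
    assert (Q' : Rabs (fp hi * fp (- lo)) / Rabs Wab <= (Ga + exp (2 * ka * d) + 1) * exp (- (B * (hi + - lo))) / B).
    { apply Q. replace (Ga * exp (- (B * (hi + - lo))) * exp (- (2 * (B - A) * d))) with
        (Ga * exp (- (B * (hi + - lo))) * exp (- (2 * (B - A) * d))) by ring. exact P. }
    eapply Rle_trans; [exact Q'|].
    eapply Rle_trans; [apply hinv; nra|].
    unfold CA. replace (- B * (hi - lo)) with (- (B * (hi + - lo))) by ring.
    apply Rmult_le_compat_r; [lra|]. unfold Rdiv. apply Rmult_le_compat_r.
    left; apply Rinv_0_lt_compat; pose proof (Rabs_pos xi); lra.
    apply Rmult_le_compat_l. left; apply Rdiv_lt_0_compat; [lra| apply ra_ka]. nra.
  - assert (P := pair_all fp GG A B d Wab Ga hd hA hAB hGa HR HI HL HG hi (- lo) hT).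
    assert (hK : 0 <= Ga ^ 2 + Ga) by nra.
    assert (Q := comb (Rabs (fp hi * fp (- lo))) Wab (exp (- (2 * (B - A) * d))) B (exp (- (A * (hi + - lo)))) (exp (- (B * (hi + - lo)))) (Ga ^ 2 + Ga) (exp (2 * ka * d)) hB hX ra_WX ra_X hK (conj (Rlt_le _ _ H) eAB) P).
    eapply Rle_trans; [exact Q|].
    eapply Rle_trans; [apply hinv; nra|].
    unfold CA. replace (- A * (hi - lo)) with (- (A * (hi + - lo))) by ring.
    right. unfold Rdiv. ring.
Qed.

End RA.

Section RB.
Hypothesis hk12 : k1 < k2.
Hypothesis hk2 : Rabs xi < k2.
Let al := sqrt (k2 ^ 2 - xi ^ 2).
Let ka := sqrt (k2 ^ 2 - k1 ^ 2).
Let M := 1 + 2 * ka * d.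
Let GG := fun s => Cf lam s + B * Sf lam s.

Lemma rb_sq : xi ^ 2 < k2 ^ 2.
Proof. rewrite <- (pow2_abs xi). pose proof (Rabs_pos xi). nra. Qed.
Lemma rb_lam : 0 < lam. Proof. unfold lam. pose proof rb_sq. lra. Qed.
Lemma rb_al : 0 < al. Proof. unfold al. apply sqrt_lt_R0. pose proof rb_sq. lra. Qed.
Lemma rb_ka : 0 < ka. Proof. unfold ka. apply sqrt_lt_R0. nra. Qed.
Lemma rb_Bka : B < ka.
Proof.
  unfold B, ka. apply sqrt_lt_1_alt. split. pose proof ab_sq; lra. pose proof rb_sq. lra.
Qed.

Lemma rb_Cf s : Cf lam s = cos (al * s).
Proof. unfold Cf. pose proof rb_lam. destruct Rlt_dec; [|lra]. reflexivity. Qed.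
Lemma rb_Sf s : Sf lam s = sin (al * s) / al.
Proof. unfold Sf. pose proof rb_lam. destruct Rlt_dec; [|lra]. reflexivity. Qed.

Lemma rb_G s : 0 <= s <= 2 * d -> Rabs (GG s) <= M * exp (B * s).
Proof.
  intros h. unfold GG. rewrite rb_Cf, rb_Sf.
  pose proof rb_al. pose proof rb_Bka. pose proof ab_B.
  assert (h1 : Rabs (cos (al * s)) <= 1) by (apply Rabs_le; apply COS_bound).
  assert (h2 : Rabs (sin (al * s) / al) <= s).
  { unfold Rdiv. rewrite Rabs_mult, (Rabs_pos_eq (/ al)) by (left; apply Rinv_0_lt_compat; lra).
    pose proof (Rabs_sin_le (al * s)) as hs. rewrite (Rabs_pos_eq (al * s)) in hs by nra.
    apply Rmult_le_reg_r with al; auto. rewrite Rmult_assoc, Rinv_l by lra. lra. }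
  assert (h3 : 1 <= exp (B * s)) by (rewrite <- exp_0; apply exp_mono; nra).
  eapply Rle_trans. apply Rabs_triang. rewrite Rabs_mult, (Rabs_pos_eq B) by lra.
  assert (B * Rabs (sin (al * s) / al) <= 2 * ka * d) by nra.
  unfold M. assert (0 <= ka * d) by nra. nra.
Qed.

Lemma rb_M : 1 <= M. Proof. unfold M. pose proof rb_ka. nra. Qed.

Lemma rb_final (cW Pi Pm : R) lo hi : 0 < cW -> 0 < Pi -> Pi <= Pm ->
  cW * B * Pi <= Rabs Wab -> lo < hi ->
  Rabs (fp hi * fp (- lo)) / Rabs Wab <=
    ((M ^ 2 + M + 1) / cW + Pm / 2) * exp (- B * Rabs (hi - lo)) / (B * Pi).
Proof.
  intros hc hPi hPm hW hlt. rewrite (Rabs_pos_eq (hi - lo)) by lra.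
  assert (hT : 0 < hi + - lo) by lra.
  pose proof ab_B as hB.
  assert (HR : forall t, d <= t -> fp t = exp (- (B * t))) by exact ab_right.
  assert (HI : forall t, - d <= t <= d -> fp t = exp (- (B * d)) * GG (d - t)) by (intros; apply ab_in; auto).
  assert (HL := ab_left).
  assert (HG := rb_G).
  assert (hM : 0 <= M) by (pose proof rb_M; lra).
  assert (P := pair_all fp GG B B d Wab M hd hB (Rle_refl _) hM HR HI HL HG hi (- lo) hT).
  replace (- (2 * (B - B) * d)) with 0 in P by ring. rewrite exp_0, Rmult_1_r in P.
  replace (- B * (hi - lo)) with (- (B * (hi + - lo))) by ring.
  set (e := exp (- (B * (hi + - lo)))) in *.
  assert (he : 0 < e) by apply exp_pos.
  assert (hW0 : 0 < Rabs Wab) by (pose proof (Rmult_lt_0_compat _ _ (Rmult_lt_0_compat _ _ hc hB) hPi); lra).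
  apply Rmult_le_reg_r with (Rabs Wab); auto.
  replace (Rabs (fp hi * fp (- lo)) / Rabs Wab * Rabs Wab) with (Rabs (fp hi * fp (- lo))) by (field; lra).
  eapply Rle_trans; [exact P|].
  assert (r1 : (M ^ 2 + M + 1) * e <= (M ^ 2 + M + 1) / cW * e / (B * Pi) * Rabs Wab).
  { replace ((M ^ 2 + M + 1) / cW * e / (B * Pi) * Rabs Wab) with ((M ^ 2 + M + 1) * e * (Rabs Wab / (cW * B * Pi))) by (field; repeat split; lra).
    assert (1 <= Rabs Wab / (cW * B * Pi)).
    { assert (hp : 0 < cW * B * Pi) by (apply Rmult_lt_0_compat; [apply Rmult_lt_0_compat|]; lra).
      apply Rmult_le_reg_r with (cW * B * Pi). lra.
      replace (Rabs Wab / (cW * B * Pi) * (cW * B * Pi)) with (Rabs Wab) by (field; lra). lra. }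
    assert (0 <= (M ^ 2 + M + 1) * e) by nra. nra. }
  assert (r2 : Rabs Wab * e / (2 * B) <= Pm / 2 * e / (B * Pi) * Rabs Wab).
  { replace (Pm / 2 * e / (B * Pi) * Rabs Wab) with (Rabs Wab * e / (2 * B) * (Pm / Pi)) by (field; lra).
    assert (1 <= Pm / Pi) by (apply Rmult_le_reg_r with Pi; auto; replace (Pm / Pi * Pi) with Pm by (field; lra); lra).
    assert (0 <= Rabs Wab * e / (2 * B)) by (apply Rmult_le_pos; [nra| left; apply Rinv_0_lt_compat; lra]). nra. }
  replace (((M ^ 2 + M + 1) / cW + Pm / 2) * e / (B * Pi) * Rabs Wab) with
    ((M ^ 2 + M + 1) / cW * e / (B * Pi) * Rabs Wab + Pm / 2 * e / (B * Pi) * Rabs Wab) by (field; lra).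
  lra.
Qed.

Lemma rb_H : 0 < asin (al / ka) < PI / 2 /\
  xi ^ 2 = k2 ^ 2 - ka ^ 2 * sin (asin (al / ka)) ^ 2 /\
  B = ka * cos (asin (al / ka)) /\ exp (- (2 * ka * d)) <= exp (- (B * d)) ^ 2 /\
  Wab = - exp (- (B * d)) ^ 2 * ka * sin (Psi ka d (asin (al / ka))) / sin (asin (al / ka)).
Proof.
  pose proof rb_al as hal. pose proof rb_ka as hka. pose proof ab_B as hB. pose proof rb_Bka.
  pose proof rb_sq. pose proof ab_sq.
  assert (eal : al ^ 2 = k2 ^ 2 - xi ^ 2) by (unfold al; rewrite pow2_sqrt; lra).
  assert (eka : ka ^ 2 = k2 ^ 2 - k1 ^ 2) by (unfold ka; rewrite pow2_sqrt; nra).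
  assert (eB : B ^ 2 = xi ^ 2 - k1 ^ 2) by (unfold B; rewrite pow2_sqrt; lra).
  assert (hs1 : al < ka) by nra.
  set (s := al / ka).
  assert (hs : 0 < s < 1).
  { unfold s. split. apply Rdiv_lt_0_compat; lra.
    apply Rmult_lt_reg_r with ka; auto. unfold Rdiv. rewrite Rmult_assoc, Rinv_l by lra. lra. }
  set (p := asin s).
  assert (sp : sin p = s) by (apply sin_asin; lra).
  assert (hp : 0 < p < PI / 2).
  { destruct (asin_bound_lt s ltac:(lra)) as [a1 a2]. fold p in a1, a2. split; auto.
    destruct (Rle_dec p 0) as [h|h]; [|lra]. exfalso.
    assert (hh : sin p <= sin 0) by (apply sin_incr_1; lra). rewrite sin_0 in hh. lra. }
  assert (cp : cos p = B / ka).
  { unfold p. rewrite cos_asin by lra.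
    replace (1 - s²) with ((B / ka) ^ 2).
    rewrite sqrt_pow2. auto. apply Rdiv_le_0_compat; lra.
    unfold s, Rsqr. replace ((B / ka) ^ 2) with (B ^ 2 / ka ^ 2) by (field; lra). rewrite eB.
    replace (1 - al / ka * (al / ka)) with ((ka ^ 2 - al ^ 2) / ka ^ 2) by (field; lra).
    rewrite eal, eka. f_equal; ring. }
  assert (eal2 : al = ka * s) by (unfold s; field; lra).
  assert (eB2 : B = ka * cos p) by (rewrite cp; field; lra).
  split; [auto|split; [|split; [auto|split]]].
  - rewrite sp. unfold s. replace (ka ^ 2 * (al / ka) ^ 2) with (al ^ 2) by (field; lra). lra.
  - replace (exp (- (B * d)) ^ 2) with (exp (- (B * d)) * exp (- (B * d))) by ring. rewrite <- exp_plus. apply exp_mono. nra.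
  - unfold Wab. fold lam. rewrite rb_Cf, rb_Sf.
    assert (elam : lam = al ^ 2) by (unfold lam; lra).
    rewrite elam.
    assert (e1 : cos (al * d) + B * (sin (al * d) / al) = sin (al * d + p) / sin p).
    { rewrite sin_plus, sp, eB2, eal2. field. split; lra. }
    assert (e2 : B * cos (al * d) - al ^ 2 * (sin (al * d) / al) = ka * cos (al * d + p)).
    { rewrite cos_plus, sp, eB2, eal2. field. split; lra. }
    rewrite e1, e2.
    assert (ePsi : Psi ka d p = 2 * (al * d + p)) by (unfold Psi; rewrite sp, eal2; ring).
    rewrite ePsi, sin_2a. field. lra.
Qed.

End RB.

End AB.

Section RC.
Hypothesis hk1 : 0 < k1.
Hypothesis hk12 : k1 < k2.
Hypothesis hk : Rabs xi < k1.
Let K := sqrt (k1 ^ 2 - xi ^ 2).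
Let lam := k2 ^ 2 - xi ^ 2.

Lemma rc_sq : xi ^ 2 < k1 ^ 2.
Proof. rewrite <- (pow2_abs xi). pose proof (Rabs_pos xi). nra. Qed.
Lemma rc_K : 0 < K. Proof. unfold K. apply sqrt_lt_R0. pose proof rc_sq. lra. Qed.
Lemma rc_kappa : kappa k1 xi = (K, 0).
Proof. unfold kappa. destruct Rlt_dec; [reflexivity|lra]. Qed.
Lemma rc_kr : kr = K. Proof. unfold kr. rewrite rc_kappa. reflexivity. Qed.
Lemma rc_ki : ki = 0. Proof. unfold ki. rewrite rc_kappa. reflexivity. Qed.
Lemma rc_E1 t : E1 ki kr t = cos (K * t).
Proof. unfold E1. rewrite rc_kr, rc_ki. rewrite Rmult_0_l, Ropp_0, exp_0. ring. Qed.
Lemma rc_E2 t : E2 ki kr t = sin (K * t).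
Proof. unfold E2. rewrite rc_kr, rc_ki. rewrite Rmult_0_l, Ropp_0, exp_0. ring. Qed.
Lemma rc_D1 t : D1 ki kr t = - K * sin (K * t).
Proof. unfold D1. rewrite rc_E1, rc_E2, rc_ki, rc_kr. ring. Qed.
Lemma rc_D2 t : D2 ki kr t = K * cos (K * t).
Proof. unfold D2. rewrite rc_E1, rc_E2, rc_ki, rc_kr. ring. Qed.

Lemma rc_right t : d <= t -> fp t ^ 2 + gp t ^ 2 = 1.
Proof.
  intros h. destruct (Rle_lt_or_eq_dec d t h) as [h'|<-].
  - destruct (up_right t h') as [-> ->]. rewrite rc_E1, rc_E2.
    pose proof (sin2_cos2 (K * t)). unfold Rsqr in H. lra.
  - rewrite fp_d, gp_d, rc_E1, rc_E2. pose proof (sin2_cos2 (K * d)). unfold Rsqr in H. lra.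
Qed.

Lemma rc_in t : - d <= t <= d -> fp t ^ 2 + gp t ^ 2 <= 1.
Proof.
  intros h.
  destruct (rs_in k1 k2 d xi fp dfp Rfp d t) as [e1 _]; try lra.
  destruct (rs_in k1 k2 d xi gp dgp Rgp d t) as [e2 _]; try lra.
  rewrite e1, e2, fp_d, gp_d, dfp_d, dgp_d, rc_D1, rc_D2, rc_E1, rc_E2.
  pose proof (CS_id (k2 ^ 2 - xi ^ 2) (t - d)) as hc.
  pose proof (sin2_cos2 (K * d)) as hs. unfold Rsqr in hs.
  set (C := Cf (k2 ^ 2 - xi ^ 2) (t - d)) in *. set (S := Sf (k2 ^ 2 - xi ^ 2) (t - d)) in *.
  assert (hKl : K ^ 2 <= k2 ^ 2 - xi ^ 2).
  { unfold K. rewrite pow2_sqrt by (pose proof rc_sq; lra). nra. }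
  assert (e : (cos (K * d) * C + - K * sin (K * d) * S) ^ 2 + (sin (K * d) * C + K * cos (K * d) * S) ^ 2
     = (C ^ 2 + K ^ 2 * S ^ 2) * (sin (K * d) * sin (K * d) + cos (K * d) * cos (K * d))) by ring.
  rewrite e, hs. assert (0 <= S ^ 2) by apply pow2_ge_0. nra.
Qed.

Lemma rc_flux : fp (- d) * dgp (- d) - dfp (- d) * gp (- d) = K.
Proof.
  rewrite (wr_const k1 k2 d xi hd fp dfp gp dgp Rfp Rgp (- d)).
  rewrite <- (wr_const k1 k2 d xi hd fp dfp gp dgp Rfp Rgp d).
  rewrite fp_d, gp_d, dfp_d, dgp_d, rc_D1, rc_D2, rc_E1, rc_E2.
  pose proof (sin2_cos2 (K * d)) as hs. unfold Rsqr in hs.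
  transitivity (K * (sin (K * d) * sin (K * d) + cos (K * d) * cos (K * d))); [ring| rewrite hs; ring].
Qed.

Lemma rc_W : (fst (wronsk um dum up dup)) ^ 2 + (snd (wronsk um dum up dup)) ^ 2 =
  (dfp (- d) - K * gp (- d)) ^ 2 + (dgp (- d) + K * fp (- d)) ^ 2.
Proof.
  rewrite W_eq. simpl.
  destruct at0_f as [a1 a2]. destruct at0_g as [b1 b2].
  pose proof (wr_const k1 k2 d xi hd fm dfm fp dfp Rfm Rfp (- d)) as w1.
  pose proof (wr_const k1 k2 d xi hd gm dgm gp dgp Rgm Rgp (- d)) as w2.
  pose proof (wr_const k1 k2 d xi hd fm dfm gp dgp Rfm Rgp (- d)) as w3.
  pose proof (wr_const k1 k2 d xi hd gm dgm fp dfp Rgm Rfp (- d)) as w4.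
  rewrite a1, a2, b1, b2 in *.
  rewrite fm_d, dfm_d, gm_d, dgm_d, rc_D1, rc_D2, rc_E1, rc_E2 in *.
  assert (hre : 2 * (fp 0 * dfp 0 - gp 0 * dgp 0) =
     cos (K * d) * (dfp (- d) - K * gp (- d)) - sin (K * d) * (dgp (- d) + K * fp (- d))) by nra.
  assert (him : 2 * (fp 0 * dgp 0 + gp 0 * dfp 0) =
     cos (K * d) * (dgp (- d) + K * fp (- d)) + sin (K * d) * (dfp (- d) - K * gp (- d))) by nra.
  rewrite hre, him. pose proof (sin2_cos2 (K * d)) as hs. unfold Rsqr in hs.
  set (c := cos (K * d)) in *. set (sn := sin (K * d)) in *.
  set (u := dfp (- d) - K * gp (- d)). set (v := dgp (- d) + K * fp (- d)).
  transitivity ((sn * sn + c * c) * (u ^ 2 + v ^ 2)); [ring| rewrite hs; ring].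
Qed.

Lemma rc_left t : t <= - d ->
  K ^ 2 * (fp t ^ 2 + gp t ^ 2) <= (fst (wronsk um dum up dup)) ^ 2 + (snd (wronsk um dum up dup)) ^ 2.
Proof.
  intros h. rewrite rc_W.
  destruct (rs_left k1 k2 d xi hd fp dfp Rfp t) as [e1 _]; auto.
  destruct (rs_left k1 k2 d xi hd gp dgp Rgp t) as [e2 _]; auto.
  rewrite e1, e2.
  assert (hl : k1 ^ 2 - xi ^ 2 = K ^ 2) by (unfold K; rewrite pow2_sqrt; [ring| pose proof rc_sq; lra]).
  assert (hc : Cf (k1 ^ 2 - xi ^ 2) (t + d) ^ 2 + K ^ 2 * Sf (k1 ^ 2 - xi ^ 2) (t + d) ^ 2 = 1)
    by (rewrite <- hl; apply CS_id).
  apply c_alg1. apply rc_K. apply rc_flux. exact hc.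
Qed.

Lemma rc_W2 : 4 * K ^ 2 <= (fst (wronsk um dum up dup)) ^ 2 + (snd (wronsk um dum up dup)) ^ 2.
Proof. rewrite rc_W. apply c_alg2. apply rc_K. apply rc_flux. Qed.

Lemma rc_final lo hi : lo < hi ->
  Cmod (up hi) * Cmod (up (- lo)) / Cmod (wronsk um dum up dup) <= 1 / K.
Proof.
  intros hlt. pose proof rc_K as hK.
  set (W := wronsk um dum up dup).
  assert (hW2 := rc_W2). fold W in hW2.
  assert (cW : Cmod W = sqrt (fst W ^ 2 + snd W ^ 2)) by (unfold Cmod; destruct W; reflexivity).
  assert (hWK : 2 * K <= Cmod W).
  { rewrite cW. rewrite <- (sqrt_pow2 (2 * K)) by lra. apply sqrt_le_1_alt. nra. }
  assert (N1 : forall t, - d <= t -> Cmod (up t) <= 1).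
  { intros t ht. rewrite Cmod_up. rewrite <- sqrt_1. apply sqrt_le_1_alt.
    destruct (Rle_dec t d). apply rc_in; lra. rewrite rc_right; lra. }
  assert (N2 : forall t, t <= - d -> Cmod (up t) <= Cmod W / K).
  { intros t ht. rewrite Cmod_up, cW.
    assert (K ^ 2 * (fp t ^ 2 + gp t ^ 2) <= fst W ^ 2 + snd W ^ 2) by (apply rc_left; auto).
    replace (sqrt (fst W ^ 2 + snd W ^ 2) / K) with (sqrt ((fst W ^ 2 + snd W ^ 2) / K ^ 2)).
    apply sqrt_le_1_alt. apply Rmult_le_reg_l with (K ^ 2). nra.
    replace (K ^ 2 * ((fst W ^ 2 + snd W ^ 2) / K ^ 2)) with (fst W ^ 2 + snd W ^ 2) by (field; lra). lra.
    rewrite sqrt_div_alt by nra. rewrite sqrt_pow2 by lra. reflexivity. }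
  assert (hCW : 0 < Cmod W) by lra.
  pose proof (Cmod_ge_0 (up hi)). pose proof (Cmod_ge_0 (up (- lo))).
  apply Rmult_le_reg_r with (Cmod W); auto.
  replace (Cmod (up hi) * Cmod (up (- lo)) / Cmod W * Cmod W) with (Cmod (up hi) * Cmod (up (- lo))) by (field; lra).
  destruct (Rle_dec hi (- d)) as [h1|h1].
  - assert (Cmod (up (- lo)) <= 1) by (apply N1; lra). assert (Cmod (up hi) <= Cmod W / K) by auto.
    replace (1 / K * Cmod W) with (Cmod W / K) by (field; lra). nra.
  - destruct (Rle_dec (- lo) (- d)) as [h2|h2].
    + assert (Cmod (up hi) <= 1) by (apply N1; lra). assert (Cmod (up (- lo)) <= Cmod W / K) by auto.
      replace (1 / K * Cmod W) with (Cmod W / K) by (field; lra). nra.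
    + assert (Cmod (up hi) <= 1) by (apply N1; lra). assert (Cmod (up (- lo)) <= 1) by (apply N1; lra).
      assert (1 <= 1 / K * Cmod W) by (replace (1 / K * Cmod W) with (Cmod W / K) by (field; lra);
        apply Rmult_le_reg_r with K; auto; replace (Cmod W / K * K) with (Cmod W) by (field; lra); lra).
      nra.
Qed.

End RC.

End Sol.



Lemma mono_div a b E D : a <= b -> 0 <= E -> 0 < D -> a * E / D <= b * E / D.
Proof. intros. unfold Rdiv. apply Rmult_le_compat_r. left; apply Rinv_0_lt_compat; auto. nra. Qed.
Lemma mono_div2 a b E D : a <= b -> 0 <= E -> 0 < D -> a / D * E <= b / D * E.
Proof. intros. apply Rmult_le_compat_r; auto. unfold Rdiv. apply Rmult_le_compat_r; auto. left; apply Rinv_0_lt_compat; auto. Qed.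

Lemma sqrt_sq_abs' x : sqrt (x ^ 2 + 0 ^ 2) = Rabs x.
Proof. rewrite <- sqrt_Rsqr_abs. f_equal. unfold Rsqr. ring. Qed.

Theorem theorem3 (k1 k2 d : R) (hk1 : 0 < k1) (hk12 : k1 < k2) (hd : 0 < d)
  (up dup um dum : R -> R -> C)
  (Hup : forall xi, is_sol k1 k2 d xi (up xi) (dup xi) /\
           (forall x, d < x -> up xi x = expIC (Cmult (RtoC x) (kappa k1 xi))))
  (Hum : forall xi, is_sol k1 k2 d xi (um xi) (dum xi) /\
           (forall x, x < - d -> um xi x = expIC (Cmult (RtoC (- x)) (kappa k1 xi)))) :
  exists zs : list R,
    NoDup zs /\
    (forall z, In z zs <->
       (k1 < z < k2 /\ wronsk (um z) (dum z) (up z) (dup z) = RtoC 0)) /\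
    exists Cst : R,
      forall xi x y : R,
        Rabs xi <> k1 -> Rabs xi <> k2 -> ~ In (Rabs xi) zs ->
        let r := resolvent (um xi) (up xi) (wronsk (um xi) (dum xi) (up xi) (dup xi)) x y in
        (y < x -> res_bounds k1 k2 d Cst xi y x zs r) /\
        (x < y -> res_bounds k1 k2 d Cst xi x y zs r).
Proof.
  assert (hka : 0 < sqrt (k2 ^ 2 - k1 ^ 2)) by (apply sqrt_lt_R0; nra).
  assert (hka2 : sqrt (k2 ^ 2 - k1 ^ 2) ^ 2 = k2 ^ 2 - k1 ^ 2) by (rewrite pow2_sqrt; nra).
  assert (HH : forall xi, k1 < Rabs xi < k2 ->
    0 < asin (sqrt (k2 ^ 2 - xi ^ 2) / sqrt (k2 ^ 2 - k1 ^ 2)) < PI / 2 /\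
    xi ^ 2 = k2 ^ 2 - sqrt (k2 ^ 2 - k1 ^ 2) ^ 2 * sin (asin (sqrt (k2 ^ 2 - xi ^ 2) / sqrt (k2 ^ 2 - k1 ^ 2))) ^ 2 /\
    sqrt (xi ^ 2 - k1 ^ 2) = sqrt (k2 ^ 2 - k1 ^ 2) * cos (asin (sqrt (k2 ^ 2 - xi ^ 2) / sqrt (k2 ^ 2 - k1 ^ 2))) /\
    exp (- (2 * sqrt (k2 ^ 2 - k1 ^ 2) * d)) <= exp (- (sqrt (xi ^ 2 - k1 ^ 2) * d)) ^ 2 /\
    Wab k1 k2 d xi = - exp (- (sqrt (xi ^ 2 - k1 ^ 2) * d)) ^ 2 * sqrt (k2 ^ 2 - k1 ^ 2) *
       sin (Psi (sqrt (k2 ^ 2 - k1 ^ 2)) d (asin (sqrt (k2 ^ 2 - xi ^ 2) / sqrt (k2 ^ 2 - k1 ^ 2)))) /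
       sin (asin (sqrt (k2 ^ 2 - xi ^ 2) / sqrt (k2 ^ 2 - k1 ^ 2)))).
  { intros xi [h1 h2]. apply (rb_H k1 k2 d hd xi h1 hk1 hk12 h2). }
  destruct (zeros_main k1 k2 (sqrt (k2 ^ 2 - k1 ^ 2)) d (fun xi => Wab k1 k2 d xi)
     (fun xi => asin (sqrt (k2 ^ 2 - xi ^ 2) / sqrt (k2 ^ 2 - k1 ^ 2)))
     (fun xi => sqrt (xi ^ 2 - k1 ^ 2)) (fun xi => exp (- (sqrt (xi ^ 2 - k1 ^ 2) * d)) ^ 2)
     hk1 hk12 hd hka hka2 HH) as [zs [cW [L [hND [hchar [hcW [hL [hPiL hlow]]]]]]]].
  exists zs. split; [exact hND|split].
  - intros z. rewrite hchar. split; intros [h1 h2]; split; auto.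
    + assert (hz : k1 < Rabs z) by (rewrite Rabs_pos_eq; lra).
      rewrite (ab_W k1 k2 d hd z (up z) (dup z) (um z) (dum z) (Hup z) (Hum z) hz), h2. reflexivity.
    + assert (hz : k1 < Rabs z) by (rewrite Rabs_pos_eq; lra).
      rewrite (ab_W k1 k2 d hd z (up z) (dup z) (um z) (dum z) (Hup z) (Hum z) hz) in h2.
      unfold RtoC in h2. injection h2. auto.
  - set (M0 := 1 + 2 * sqrt (k2 ^ 2 - k1 ^ 2) * d).
    set (Cb := (M0 ^ 2 + M0 + 1) / cW + L / 2).
    set (Cst := Rmax (Rmax (CA k1 k2 d) Cb) 1).
    assert (hC1 : CA k1 k2 d <= Cst) by (unfold Cst; eapply Rle_trans; [apply Rmax_l|apply Rmax_l]).
    assert (hC2 : Cb <= Cst) by (unfold Cst; eapply Rle_trans; [apply Rmax_r|apply Rmax_l]).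
    assert (hC3 : 1 <= Cst) by (unfold Cst; apply Rmax_r).
    exists Cst. intros xi x y hx1 hx2 hx3.
    set (W := wronsk (um xi) (dum xi) (up xi) (dup xi)).
    assert (KB : forall lo hi (rr : C), lo < hi ->
       (W <> RtoC 0 -> Cmod rr = Cmod (up xi hi) * Cmod (up xi (- lo)) / Cmod W) ->
       res_bounds k1 k2 d Cst xi lo hi zs rr).
    { intros lo hi rr hlt hmod. unfold res_bounds. cbv zeta.
      assert (hT : 0 <= exp (- sqrt (xi ^ 2 - k1 ^ 2) * Rabs (hi - lo))) by (left; apply exp_pos).
      pose proof (Rabs_pos xi) as hax.
      destruct (Rlt_le_dec (Rabs xi) k1) as [c1|c1].
      -
        set (K := sqrt (k1 ^ 2 - xi ^ 2)).
        assert (hsq : xi ^ 2 < k1 ^ 2) by (rewrite <- (pow2_abs xi); nra).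
        assert (hK : 0 < K) by (apply sqrt_lt_R0; lra).
        assert (hW2 := rc_W2 k1 k2 d hd xi (up xi) (dup xi) (um xi) (dum xi) (Hup xi) (Hum xi) c1).
        fold W in hW2.
        assert (hW : W <> RtoC 0).
        { intro e. rewrite e in hW2. unfold RtoC in hW2. cbn [fst snd] in hW2. fold K in hW2.
          assert (0 < K ^ 2) by (apply pow_lt; auto). lra. }
        assert (hr : Cmod rr <= 1 / K).
        { rewrite (hmod hW). apply (rc_final k1 k2 d hd xi (up xi) (dup xi) (um xi) (dum xi) (Hup xi) (Hum xi) hk1 hk12 c1 lo hi hlt). }
        split; [intros; lra| split; [intros; lra|]].
        intros _. replace (sqrt (Rabs (xi ^ 2 - k1 ^ 2))) with K.
        eapply Rle_trans; [exact hr|]. unfold Rdiv. apply Rmult_le_compat_r; [left; apply Rinv_0_lt_compat; auto|lra].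
        unfold K. f_equal. rewrite Rabs_left by lra. ring.
      - assert (c1' : k1 < Rabs xi) by lra.
        set (B := sqrt (xi ^ 2 - k1 ^ 2)).
        assert (hsq : k1 ^ 2 < xi ^ 2) by (rewrite <- (pow2_abs xi); nra).
        assert (hB : 0 < B) by (apply sqrt_lt_R0; lra).
        assert (hsB : sqrt (Rabs (xi ^ 2 - k1 ^ 2)) = B) by (unfold B; f_equal; apply Rabs_pos_eq; lra).
        assert (eW := ab_W k1 k2 d hd xi (up xi) (dup xi) (um xi) (dum xi) (Hup xi) (Hum xi) c1').
        fold W in eW.
        assert (hgp := ab_gp k1 k2 d hd xi (up xi) (dup xi) (um xi) (dum xi) (Hup xi) (Hum xi) c1').
        assert (hCu : forall t, Cmod (up xi t) = Rabs (fp (up xi) t)).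
        { intros t. rewrite Cmod_up, hgp. apply sqrt_sq_abs'. }
        assert (hCW : Cmod W = Rabs (Wab k1 k2 d xi)).
        { rewrite eW. unfold Cmod. cbn [fst snd]. apply sqrt_sq_abs'. }
        assert (hmod' : Wab k1 k2 d xi <> 0 -> Cmod rr = Rabs (fp (up xi) hi * fp (up xi) (- lo)) / Rabs (Wab k1 k2 d xi)).
        { intros hw. rewrite hmod. rewrite hCu, hCu, hCW, Rabs_mult. reflexivity.
          rewrite eW. intro e. unfold RtoC in e. injection e. auto. }
        destruct (Rlt_le_dec (Rabs xi) k2) as [c2|c2].
        +
          destruct (hlow xi (conj c1' c2) hx3) as [hPi hWl]. fold B in hWl.
          assert (hPL := hPiL xi (conj c1' c2)).
          set (Pi := prodR (map (fun z => Rabs (xi ^ 2 - z ^ 2)) zs)) in *.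
          assert (hw : Wab k1 k2 d xi <> 0).
          { intro e. rewrite e, Rabs_R0 in hWl. assert (0 < cW * B * Pi) by (apply Rmult_lt_0_compat; [apply Rmult_lt_0_compat|]; lra). lra. }
          split; [intros; lra| split; [|intros; lra]].
          intros _. rewrite (hmod' hw), hsB.
          eapply Rle_trans.
          apply (rb_final k1 k2 d hd xi (up xi) (dup xi) (um xi) (dum xi) (Hup xi) (Hum xi) c1' hk1 hk12 c2 cW Pi L lo hi hcW hPi hPL hWl hlt).
          apply mono_div; auto. apply Rmult_lt_0_compat; auto.
        +
          assert (c2' : k2 < Rabs xi) by lra.
          assert (hWa := ra_W k1 k2 d hd xi c1' hk1 hk12 c2').
          assert (hw : Wab k1 k2 d xi <> 0).
          { intro e. rewrite e, Rabs_R0 in hWa.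
            assert (0 < exp (- (B * d)) ^ 2 * B * exp (sqrt (xi ^ 2 - k2 ^ 2) * d) ^ 2).
            { apply Rmult_lt_0_compat; [apply Rmult_lt_0_compat|]; auto; apply pow_lt; apply exp_pos. }
            fold B in hWa. lra. }
          destruct (ra_final k1 k2 d hd xi (up xi) (dup xi) (um xi) (dum xi) (Hup xi) (Hum xi) c1' hk1 hk12 c2' lo hi hlt) as [ra1 ra2].
          split; [|split; intros; lra].
          intros _. rewrite (hmod' hw). split.
          * intros hout. eapply Rle_trans. apply ra1; auto. apply mono_div2; [lra| left; apply exp_pos| lra].
          * intros _. eapply Rle_trans. apply ra2. apply mono_div2; [lra| left; apply exp_pos| lra]. }
    simpl. split; intros hlt; apply KB; auto; intros hW.
    + apply (res_mod_gt k1 k2 d hd xi (up xi) (dup xi) (um xi) (dum xi) (Hup xi) (Hum xi)); auto.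
    + apply (res_mod_lt k1 k2 d hd xi (up xi) (dup xi) (um xi) (dum xi) (Hup xi) (Hum xi)); auto.
Qed.
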